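(* Let $0<3x_0<L$, $\gamma=\gamma(x_0,L)$, $\lambda=\lambda(x_0,L)=\frac{2L}{L+x_0}$, and let $\mathcal V$ be an admissible variation of $\gamma$, with $\varphi,\psi$ defined by $X=\varphi N+\varphi_\tau\dot\gamma$, $X'=\psi N+\psi_\tau\dot\gamma$. Then $$\left.\frac{d^2(\mathcal F-\lambda\mathcal A)(\mathcal V(\cdot,t))}{dt^2}\right|_{t=0}=\int_0^{2L}\Big((2-\lambda)H\varphi^2-\frac{2\dot\varphi^2}{H}+\frac{2\ddot\varphi^2}{H^3}\Big)ds+\Big[\frac{\dot\psi}{H^2}\Big]_0^{2L}\ \ge\ \int_0^{2L}\Big((2-\lambda)H\varphi^2-\frac{2\dot\varphi^2}{H}+\frac{2\ddot\varphi^2}{H^3}\Big)ds.$$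
   Context: Notation: $(\xi,\eta)^\perp=(\eta,-\xi)$; for a regular curve $\gamma\in C^2([0,2L],\mathbb R^2)$, curvature $H=\langle\dot\gamma,\ddot\gamma^\perp\rangle/|\dot\gamma|^3$, normal $N=\dot\gamma^\perp/|\dot\gamma|$; strictly counterclockwise means $H>0$. A curve $\gamma=(x,y)$ is admissible if $\gamma\in C^\infty([0,2L],\mathbb R^2)$ is regular, strictly counterclockwise, injective, $\gamma(0)=(x_0,0)$, $\gamma(2L)=(-x_0,0)$, $y>0$ on $(0,2L)$. $\mathcal A(\gamma)=\frac12\int_0^{2L}(x\dot y-\dot xy)ds$, $\mathcal F(\gamma)=\int_0^{2L}|\dot\gamma|H^{-1}ds$. An admissible variation is a smooth $\mathcal V:[0,2L]\times[-t_{\mathcal V},t_{\mathcal V}]\to\mathbb R^2$ with $\mathcal V(\cdot,0)=\gamma$ and every $\mathcal V(\cdot,t)$ admissible; $X=\partial_t\mathcal V|_{t=0}$, $X'=\partial_t^2\mathcal V|_{t=0}$. For $0<3x_0<L$: with $\sigma=\pi\sqrt{x_0/(L+x_0)}$, $k=L/\sin\sigma$, $a(s)=\arcsin((s-L)/k)$, $\gamma(x_0,L)=(x,y)$ on $[0,2L]$ with $x(s)=-\frac k2\big(\frac{\sigma}{\pi+\sigma}\sin(\tfrac{\pi+\sigma}{\sigma}a(s))+\frac{\sigma}{\pi-\sigma}\sin(\tfrac{\pi-\sigma}{\sigma}a(s))\big)$, $y(s)=\frac k2\big(\frac{\sigma}{\pi+\sigma}\cos(\tfrac{\pi+\sigma}{\sigma}a(s))+\frac{\sigma}{\pi-\sigma}\cos(\tfrac{\pi-\sigma}{\sigma}a(s))\big)+\frac{\pi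 x_0}{\sigma\tan\sigma}$; it is admissible, arc-length parametrized, with curvature $H(s)=\frac{\pi}{\sigma\sqrt{k^2-(s-L)^2}}$. *)

(* Defs.v *)
From Stdlib Require Import Reals Lra List.
From Coquelicot Require Import Coquelicot.
Open Scope R_scope.

Definition pds (f : R -> R -> R) : R -> R -> R :=
  fun s t => Derive (fun u => f u t) s.
Definition pdt (f : R -> R -> R) : R -> R -> R :=
  fun s t => Derive (fun u => f s u) t.

(* iterated partial derivative along a word of directions (true = s, false = t) *)
Fixpoint pdl (l : list bool) (f : R -> R -> R) : R -> R -> R :=
  match l with
  | nil => f
  | b :: l' => (if b then pds else pdt) (pdl l' f)
  end.

Definition smooth2 (f : R -> R -> R) : Prop :=
  forall (l : list bool) (s t : R),
    ex_derive (fun u => pdl l f u t) s /\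
    ex_derive (fun u => pdl l f s u) t /\
    continuous (fun p : R * R => pdl l f (fst p) (snd p)) (s, t).

Definition d1 (c : R -> R) : R -> R := fun s => Derive c s.
Definition d2 (c : R -> R) : R -> R := fun s => Derive (Derive c) s.

Definition speed (cx cy : R -> R) (s : R) : R :=
  sqrt (d1 cx s ^ 2 + d1 cy s ^ 2).

(* H = <gamma', gamma''^perp> / |gamma'|^3, with (xi,eta)^perp = (eta,-xi) *)
Definition curvature (cx cy : R -> R) (s : R) : R :=
  (d1 cx s * d2 cy s - d1 cy s * d2 cx s) / speed cx cy s ^ 3.

Definition normal_x (cx cy : R -> R) (s : R) : R := d1 cy s / speed cx cy s.
Definition normal_y (cx cy : R -> R) (s : R) : R := - d1 cx s / speed cx cy s.

Definition areaA (L : R) (cx cy : R -> R) : R :=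
  / 2 * RInt (fun s => cx s * d1 cy s - d1 cx s * cy s) 0 (2 * L).

Definition funcF (L : R) (cx cy : R -> R) : R :=
  RInt (fun s => speed cx cy s / curvature cx cy s) 0 (2 * L).

Definition admissible_curve (x0 L : R) (cx cy : R -> R) : Prop :=
  (forall (n : nat) (s : R), 0 <= s <= 2 * L ->
      ex_derive (Derive_n cx n) s /\ ex_derive (Derive_n cy n) s) /\
  (forall s, 0 <= s <= 2 * L -> speed cx cy s <> 0) /\
  (forall s, 0 <= s <= 2 * L -> 0 < curvature cx cy s) /\
  (forall s1 s2, 0 <= s1 <= 2 * L -> 0 <= s2 <= 2 * L ->
      cx s1 = cx s2 -> cy s1 = cy s2 -> s1 = s2) /\
  cx 0 = x0 /\ cy 0 = 0 /\ cx (2 * L) = - x0 /\ cy (2 * L) = 0 /\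
  (forall s, 0 < s < 2 * L -> 0 < cy s).

(* admissible variation V = (Vx, Vy) of gamma = (gx, gy) on [0,2L] x [-T,T]:
   V is (the restriction to the rectangle of) a smooth map, V(.,0) = gamma on
   [0,2L], and every V(.,t), |t| <= T, is admissible. *)
Definition admissible_variation (x0 L : R) (gx gy : R -> R)
    (Vx Vy : R -> R -> R) (T : R) : Prop :=
  0 < T /\ smooth2 Vx /\ smooth2 Vy /\
  (forall s, 0 <= s <= 2 * L -> Vx s 0 = gx s /\ Vy s 0 = gy s) /\
  (forall t, -T <= t <= T ->
      admissible_curve x0 L (fun s => Vx s t) (fun s => Vy s t)).

Definition sigma0 (x0 L : R) : R := PI * sqrt (x0 / (L + x0)).
Definition kk (x0 L : R) : R := L / sin (sigma0 x0 L).
Definition aa (x0 L : R) (s : R) : R := asin ((s - L) / kk x0 L).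

Definition gamma_x (x0 L : R) (s : R) : R :=
  let sg := sigma0 x0 L in let k := kk x0 L in let a := aa x0 L s in
  - (k / 2) * (sg / (PI + sg) * sin ((PI + sg) / sg * a)
               + sg / (PI - sg) * sin ((PI - sg) / sg * a)).

Definition gamma_y (x0 L : R) (s : R) : R :=
  let sg := sigma0 x0 L in let k := kk x0 L in let a := aa x0 L s in
  (k / 2) * (sg / (PI + sg) * cos ((PI + sg) / sg * a)
             + sg / (PI - sg) * cos ((PI - sg) / sg * a))
  + PI * x0 / (sg * tan sg).

Definition lambda0 (x0 L : R) : R := 2 * L / (L + x0).

(* Main.v *)
Require Import Defs.
From Stdlib Require Import Reals.
From Coquelicot Require Import Coquelicot.
From Stdlib Require Import Lra Lia List FunctionalExtensionality.
Require Import Defs.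
Open Scope R_scope.

Lemma pdl_app (l m : list bool) (f : R -> R -> R) :
  pdl l (pdl m f) = pdl (l ++ m) f.
Proof. induction l as [|b l IH]; simpl; [reflexivity|]. now rewrite IH. Qed.

Lemma smooth2_pdl (l : list bool) (f : R -> R -> R) : smooth2 f -> smooth2 (pdl l f).
Proof. intros Hf m s t. rewrite pdl_app. apply Hf. Qed.

Lemma smooth2_pds f : smooth2 f -> smooth2 (pds f).
Proof. intro H. exact (smooth2_pdl (true::nil) f H). Qed.
Lemma smooth2_pdt f : smooth2 f -> smooth2 (pdt f).
Proof. intro H. exact (smooth2_pdl (false::nil) f H). Qed.

Lemma smooth2_cont f : smooth2 f -> forall s t, continuity_2d_pt f s t.
Proof.
  intros H s t. apply continuity_2d_pt_filterlim.
  destruct (H nil s t) as [_ [_ Hc]]. exact Hc.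
Qed.

Lemma smooth2_ds f : smooth2 f -> forall s t, is_derive (fun u => f u t) s (pds f s t).
Proof. intros H s t. destruct (H nil s t) as [H1 _]. apply Derive_correct. exact H1. Qed.
Lemma smooth2_dt f : smooth2 f -> forall s t, is_derive (fun u => f s u) t (pdt f s t).
Proof. intros H s t. destruct (H nil s t) as [_ [H1 _]]. apply Derive_correct. exact H1. Qed.

Lemma smooth2_schwarz f : smooth2 f -> forall s t, pds (pdt f) s t = pdt (pds f) s t.
Proof.
  intros H s t. unfold pds, pdt.
  apply (Schwarz f s t).
  - apply locally_2d_forall. intros u v.
    destruct (H nil u v) as [A [B _]].
    destruct (H (false::nil) u v) as [C _].
    destruct (H (true::nil) u v) as [_ [D _]].
    simpl in *. repeat split; assumption.
  - apply (smooth2_cont (pdl (true::false::nil) f)). now apply smooth2_pdl.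
  - apply (smooth2_cont (pdl (false::true::nil) f)). now apply smooth2_pdl.
Qed.

Lemma smooth2_schwarz_fun f : smooth2 f -> pds (pdt f) = pdt (pds f).
Proof. intro H. apply functional_extensionality; intro s. apply functional_extensionality; intro t.
  now apply smooth2_schwarz. Qed.

Lemma cont2d_swap (g : R -> R -> R) s t :
  continuity_2d_pt g s t -> continuity_2d_pt (fun t s => g s t) t s.
Proof.
  intros H eps. destruct (H eps) as [d Hd]. exists d. intros u v Hu Hv. apply Hd; assumption.
Qed.

Lemma cont2d_cont1 (g : R -> R -> R) x y :
  continuity_2d_pt g x y -> continuous (fun v => g x v) y.
Proof.
  intros H. apply continuity_pt_filterlim. intros eps Heps.
  destruct (H (mkposreal eps Heps)) as [d Hd].
  exists d. split; [apply cond_pos|]. intros v [_ Hv]. simpl in *.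
  unfold R_dist in Hv. apply Hd; [|exact Hv]. rewrite Rminus_eq_0, Rabs_R0. apply cond_pos.
Qed.

Lemma cont2d_pow (g : R -> R -> R) x y n :
  continuity_2d_pt g x y -> continuity_2d_pt (fun u v => g u v ^ n) x y.
Proof.
  intros H. induction n as [|n IH]; simpl.
  - apply continuity_2d_pt_const.
  - apply continuity_2d_pt_mult; assumption.
Qed.

Section D2.
Variables (f f1 f2 : R -> R -> R) (a b T : R) (Om : R -> R -> Prop).
Hypothesis Hab : a <= b.
Hypothesis HT : 0 < T.
Hypothesis Hopen : forall t s, Om t s -> locally_2d Om t s.
Hypothesis Hin : forall t s, -T < t < T -> a <= s <= b -> Om t s.
Hypothesis Hd1 : forall t s, Om t s -> is_derive (fun z => f z s) t (f1 t s).
Hypothesis Hd2 : forall t s, Om t s -> is_derive (fun z => f1 z s) t (f2 t s).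
Hypothesis Hc0 : forall t s, Om t s -> continuity_2d_pt f t s.
Hypothesis Hc1 : forall t s, Om t s -> continuity_2d_pt f1 t s.
Hypothesis Hc2 : forall t s, Om t s -> continuity_2d_pt f2 t s.

Lemma locT t : -T < t < T -> locally t (fun z => -T < z < T).
Proof.
  intros Ht. assert (He : 0 < Rmin (T - t) (T + t)) by (apply Rmin_pos; lra).
  exists (mkposreal _ He). intros z Hz. simpl in Hz.
  change (Rabs (z - t) < Rmin (T - t) (T + t)) in Hz.
  pose proof (Rmin_l (T-t) (T+t)). pose proof (Rmin_r (T-t) (T+t)).
  apply Rabs_def2 in Hz. lra.
Qed.

Lemma exRInt_of (g : R -> R -> R) t :
  (forall t s, Om t s -> continuity_2d_pt g t s) -> -T < t < T -> ex_RInt (fun s => g t s) a b.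
Proof.
  intros Hg Ht. apply (ex_RInt_continuous (V := R_CompleteNormedModule)). intros z Hz.
  rewrite Rmin_left in Hz by lra. rewrite Rmax_right in Hz by lra.
  apply cont2d_cont1. apply Hg. apply Hin; auto.
Qed.

Lemma D2_step (g g1 : R -> R -> R) :
  (forall t s, Om t s -> is_derive (fun z => g z s) t (g1 t s)) ->
  (forall t s, Om t s -> continuity_2d_pt g t s) ->
  (forall t s, Om t s -> continuity_2d_pt g1 t s) ->
  forall t, -T < t < T -> is_derive (fun z => RInt (fun s => g z s) a b) t (RInt (fun s => g1 t s) a b).
Proof.
  intros Hd Hc Hc' t Ht.
  assert (E : RInt (fun s => g1 t s) a b = RInt (fun s => Derive (fun u => g u s) t) a b).
  { apply RInt_ext. intros x Hx. symmetry. apply is_derive_unique. apply Hd.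
    rewrite Rmin_left in Hx by lra. rewrite Rmax_right in Hx by lra. apply Hin; auto; lra. }
  rewrite E. apply (is_derive_RInt_param g a b t).
  - apply (filter_imp (fun z => -T < z < T)); [|now apply locT].
    intros z Hz s Hs. rewrite Rmin_left in Hs by lra. rewrite Rmax_right in Hs by lra.
    eexists. apply Hd. apply Hin; auto.
  - intros s Hs. rewrite Rmin_left in Hs by lra. rewrite Rmax_right in Hs by lra.
    apply continuity_2d_pt_ext_loc with (f := g1).
    + apply locally_2d_impl with (P := Om); [|apply Hopen; apply Hin; auto].
      apply locally_2d_forall. intros u v Huv. symmetry. apply is_derive_unique. apply Hd; auto.
    + apply Hc'. apply Hin; auto.
  - apply (filter_imp (fun z => -T < z < T)); [|now apply locT].
    intros z Hz. apply exRInt_of; auto.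
Qed.

Lemma D2_main :
  (forall t, -T < t < T -> is_derive (fun z => RInt (fun s => f z s) a b) t (RInt (fun s => f1 t s) a b)) /\
  (forall t, -T < t < T -> is_derive (fun z => RInt (fun s => f1 z s) a b) t (RInt (fun s => f2 t s) a b)).
Proof. split; apply D2_step; auto. Qed.
End D2.
Ltac sder H := match type of H with is_derive ?f ?z ?l =>
  match goal with |- context [Derive ?g z] =>
    let E := fresh in assert (E : Derive g z = l) by (apply is_derive_unique; exact H);
    rewrite E; clear E end end.

Definition eR (mu a1 a2 b1 b2 v1 v2 : R) : R :=
  (a1^2+a2^2)^2/(a1*b2-a2*b1) - mu*(v1*a2 - a1*v2).
Definition eR1 (mu a1 a2 b1 b2 v1 v2 a1' a2' b1' b2' v1' v2' : R) : R :=
  2*(a1^2+a2^2)*(2*(a1*a1'+a2*a2'))/(a1*b2-a2*b1)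
  - (a1^2+a2^2)^2*(a1'*b2+a1*b2'-a2'*b1-a2*b1')/(a1*b2-a2*b1)^2
  - mu*(v1'*a2+v1*a2'-a1'*v2-a1*v2').
Definition eR2 (mu a1 a2 b1 b2 v1 v2 a1' a2' b1' b2' v1' v2' a1'' a2'' b1'' b2'' v1'' v2'' : R) : R :=
  let q := a1^2+a2^2 in let c := a1*b2-a2*b1 in
  let qt := 2*(a1*a1'+a2*a2') in let ct := a1'*b2+a1*b2'-a2'*b1-a2*b1' in
  let qtt := 2*(a1'^2+a2'^2) + 2*(a1*a1''+a2*a2'') in
  let ctt := a1''*b2+2*a1'*b2'+a1*b2''-a2''*b1-2*a2'*b1'-a2*b1'' in
  2*qt^2/c + 2*q*qtt/c - 4*q*qt*ct/c^2 - q^2*ctt/c^2 + 2*q^2*ct^2/c^3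
  - mu*(v1''*a2+2*v1'*a2'+v1*a2''-a1''*v2-2*a1'*v2'-a1*v2'').

Lemma eR_derive mu (a1 a2 b1 b2 v1 v2 : R -> R) (a1' a2' b1' b2' v1' v2' z : R) :
  is_derive a1 z a1' -> is_derive a2 z a2' -> is_derive b1 z b1' -> is_derive b2 z b2' ->
  is_derive v1 z v1' -> is_derive v2 z v2' -> a1 z * b2 z - a2 z * b1 z <> 0 ->
  is_derive (fun z => eR mu (a1 z) (a2 z) (b1 z) (b2 z) (v1 z) (v2 z)) z
    (eR1 mu (a1 z) (a2 z) (b1 z) (b2 z) (v1 z) (v2 z) a1' a2' b1' b2' v1' v2').
Proof.
  intros H1 H2 H3 H4 H5 H6 Hc. unfold eR, eR1.
  auto_derive.
  - repeat split; try (eexists; eassumption). exact Hc.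
    sder H1; sder H2; sder H3; sder H4; sder H5; sder H6.
    field. exact Hc.
Qed.

Lemma eR1_derive mu (a1 a2 b1 b2 v1 v2 a1' a2' b1' b2' v1' v2' : R -> R) (a1'' a2'' b1'' b2'' v1'' v2'' z : R) :
  is_derive a1 z (a1' z) -> is_derive a2 z (a2' z) -> is_derive b1 z (b1' z) -> is_derive b2 z (b2' z) ->
  is_derive v1 z (v1' z) -> is_derive v2 z (v2' z) ->
  is_derive a1' z a1'' -> is_derive a2' z a2'' -> is_derive b1' z b1'' -> is_derive b2' z b2'' ->
  is_derive v1' z v1'' -> is_derive v2' z v2'' -> a1 z * b2 z - a2 z * b1 z <> 0 ->
  is_derive (fun z => eR1 mu (a1 z) (a2 z) (b1 z) (b2 z) (v1 z) (v2 z) (a1' z) (a2' z) (b1' z) (b2' z) (v1' z) (v2' z)) z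
    (eR2 mu (a1 z) (a2 z) (b1 z) (b2 z) (v1 z) (v2 z) (a1' z) (a2' z) (b1' z) (b2' z) (v1' z) (v2' z) a1'' a2'' b1'' b2'' v1'' v2'').
Proof.
  intros H1 H2 H3 H4 H5 H6 K1 K2 K3 K4 K5 K6 Hc. unfold eR1, eR2.
  auto_derive.
  - repeat split; try (eexists; eassumption); repeat apply Rmult_integral_contrapositive_currified; try exact Hc; apply R1_neq_R0.
  - sder H1; sder H2; sder H3; sder H4; sder H5; sder H6.
    sder K1; sder K2; sder K3; sder K4; sder K5; sder K6.
    field. exact Hc.
Qed.

#[export] Hint Resolve smooth2_pds smooth2_pdt : smooth.

Ltac c2d :=
  match goal with
  | |- continuity_2d_pt (fun u v => @?A u v + @?B u v) _ _ => apply (continuity_2d_pt_plus A B); c2d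
  | |- continuity_2d_pt (fun u v => @?A u v - @?B u v) _ _ => apply (continuity_2d_pt_minus A B); c2d
  | |- continuity_2d_pt (fun u v => @?A u v * @?B u v) _ _ => apply (continuity_2d_pt_mult A B); c2d
  | |- continuity_2d_pt (fun u v => - @?A u v) _ _ => apply (continuity_2d_pt_opp A); c2d
  | |- continuity_2d_pt (fun u v => @?A u v / @?B u v) _ _ =>
      apply (continuity_2d_pt_mult A (fun u v => / B u v)); [c2d | apply (continuity_2d_pt_inv B); [c2d | ]]
  | |- continuity_2d_pt (fun u v => @?A u v ^ ?n) _ _ => apply (cont2d_pow A); c2d
  | |- continuity_2d_pt (fun u v => ?c) _ _ => apply continuity_2d_pt_const
  | |- continuity_2d_pt (fun u v => ?g v u) _ _ => apply (cont2d_swap g); apply smooth2_cont; auto with smooth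
  | _ => idtac
  end.

Section Integrand.
Variables (Vx Vy : R -> R -> R) (mu T : R).
Hypothesis HVx : smooth2 Vx.
Hypothesis HVy : smooth2 Vy.
Hypothesis HT : 0 < T.

Definition cc t s := pds Vx s t * pds (pds Vy) s t - pds Vy s t * pds (pds Vx) s t.
Definition ff t s := eR mu (pds Vx s t) (pds Vy s t) (pds (pds Vx) s t) (pds (pds Vy) s t) (Vx s t) (Vy s t).
Definition ff1 t s := eR1 mu (pds Vx s t) (pds Vy s t) (pds (pds Vx) s t) (pds (pds Vy) s t) (Vx s t) (Vy s t)
  (pdt (pds Vx) s t) (pdt (pds Vy) s t) (pdt (pds (pds Vx)) s t) (pdt (pds (pds Vy)) s t) (pdt Vx s t) (pdt Vy s t).
Definition ff2 t s := eR2 mu (pds Vx s t) (pds Vy s t) (pds (pds Vx) s t) (pds (pds Vy) s t) (Vx s t) (Vy s t)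
  (pdt (pds Vx) s t) (pdt (pds Vy) s t) (pdt (pds (pds Vx)) s t) (pdt (pds (pds Vy)) s t) (pdt Vx s t) (pdt Vy s t)
  (pdt (pdt (pds Vx)) s t) (pdt (pdt (pds Vy)) s t) (pdt (pdt (pds (pds Vx))) s t) (pdt (pdt (pds (pds Vy))) s t)
  (pdt (pdt Vx) s t) (pdt (pdt Vy) s t).
Definition Om t s := -T < t < T /\ cc t s <> 0.

Lemma cc_cont t s : continuity_2d_pt cc t s.
Proof. unfold cc. c2d. Qed.

Lemma Om_open t s : Om t s -> locally_2d Om t s.
Proof.
  intros [Ht Hc]. apply locally_2d_and.
  - assert (He : 0 < Rmin (T - t) (T + t)) by (apply Rmin_pos; lra).
    exists (mkposreal _ He). intros u v Hu _. simpl in Hu.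
    pose proof (Rmin_l (T-t) (T+t)). pose proof (Rmin_r (T-t) (T+t)).
    apply Rabs_def2 in Hu. lra.
  - apply continuity_2d_pt_neq_0; [apply cc_cont | exact Hc].
Qed.

Lemma ff_der t s : Om t s -> is_derive (fun z => ff z s) t (ff1 t s).
Proof.
  intros [_ Hc]. unfold ff, ff1.
  apply (eR_derive mu (fun z => pds Vx s z) (fun z => pds Vy s z) (fun z => pds (pds Vx) s z)
     (fun z => pds (pds Vy) s z) (fun z => Vx s z) (fun z => Vy s z)); try apply smooth2_dt; auto with smooth.
Qed.

Lemma ff1_der t s : Om t s -> is_derive (fun z => ff1 z s) t (ff2 t s).
Proof.
  intros [_ Hc]. unfold ff1, ff2.
  apply (eR1_derive mu (fun z => pds Vx s z) (fun z => pds Vy s z) (fun z => pds (pds Vx) s z)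
     (fun z => pds (pds Vy) s z) (fun z => Vx s z) (fun z => Vy s z)
     (fun z => pdt (pds Vx) s z) (fun z => pdt (pds Vy) s z) (fun z => pdt (pds (pds Vx)) s z)
     (fun z => pdt (pds (pds Vy)) s z) (fun z => pdt Vx s z) (fun z => pdt Vy s z));
   try apply smooth2_dt; auto with smooth.
Qed.

Lemma ff_cont t s : Om t s -> continuity_2d_pt ff t s.
Proof. intros [_ Hc]. unfold ff, eR. c2d. exact Hc. Qed.
Lemma ff1_cont t s : Om t s -> continuity_2d_pt ff1 t s.
Proof. intros [_ Hc]. unfold ff1, eR1. c2d; try exact Hc; apply pow_nonzero; exact Hc. Qed.
Lemma ff2_cont t s : Om t s -> continuity_2d_pt ff2 t s.
Proof. intros [_ Hc]. unfold ff2, eR2. cbv zeta. c2d; try exact Hc; apply pow_nonzero; exact Hc. Qed.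
End Integrand.

Lemma is_derive_asin z : -1 < z < 1 -> is_derive asin z (1 / sqrt (1 - z²)).
Proof.
  intros H. apply is_derive_Reals. apply derive_pt_eq_1 with (pr := derivable_pt_asin z H).
  apply derive_pt_asin.
Qed.

Lemma is_derive_eq (f : R -> R) (x l l' : R) : is_derive f x l -> l = l' -> is_derive f x l'.
Proof. intros H E. now subst. Qed.

Section Gam.
Variables x0 L : R.
Hypothesis Hx0 : 0 < 3 * x0.
Hypothesis HL : 3 * x0 < L.

Let sg := sigma0 x0 L.
Let k := kk x0 L.
Definition al := x0 / (L + x0).
Definition bt := sigma0 x0 L / PI.

Lemma al_bounds : 0 < al < 1/4.
Proof. unfold al. split; [apply Rdiv_lt_0_compat; lra|].
  apply Rmult_lt_reg_r with (L + x0); [lra|]. unfold Rdiv. rewrite Rmult_assoc, Rinv_l by lra. lra. Qed.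

Lemma bt_sq : bt ^ 2 = al.
Proof.
  unfold bt, sigma0. pose proof al_bounds. fold al. field_simplify; [|apply PI_neq0].
  rewrite pow2_sqrt by lra. reflexivity.
Qed.

Lemma bt_bounds : 0 < bt < 1/2.
Proof.
  pose proof al_bounds. unfold bt, sigma0. fold al.
  replace (PI * sqrt al / PI) with (sqrt al) by (field; apply PI_neq0).
  split; [apply sqrt_lt_R0; lra|].
  replace (1/2) with (sqrt (1/4)). apply sqrt_lt_1_alt; lra.
  replace (1/4) with ((1/2)^2) by field. apply sqrt_pow2. lra.
Qed.

Lemma sg_eq : sg = PI * bt.
Proof. unfold sg, bt. field. apply PI_neq0. Qed.

Lemma sg_bounds : 0 < sg < PI / 2.
Proof. rewrite sg_eq. pose proof bt_bounds. pose proof PI_RGT_0. split; nra. Qed.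

Lemma sin_sg : 0 < sin sg < 1.
Proof.
  pose proof sg_bounds. pose proof PI_RGT_0. split.
  - apply sin_gt_0; lra.
  - rewrite <- sin_PI2. apply sin_increasing_1; lra.
Qed.

Lemma k_gt_L : L < k.
Proof.
  pose proof sin_sg. unfold k, kk. fold sg.
  apply Rmult_lt_reg_r with (sin sg); [lra|]. unfold Rdiv. rewrite Rmult_assoc, Rinv_l by lra. nra.
Qed.

Definition wq (s : R) := k ^ 2 - (s - L) ^ 2.
Definition th (s : R) := PI * aa x0 L s / sg.
Definition gT1 (s : R) := - cos (th s).
Definition gT2 (s : R) := - sin (th s).
Definition hh (s : R) := bt * sqrt (wq s).
Definition hh1 (s : R) := - bt * (s - L) / sqrt (wq s).

Definition inU (s : R) := -k < s - L < k.

Lemma wq_pos s : inU s -> 0 < wq s.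
Proof. unfold inU, wq. intros H. pose proof k_gt_L. nra. Qed.

Lemma inU_open s : inU s -> locally s inU.
Proof.
  intros H. unfold inU in *. assert (He : 0 < Rmin (k - (s - L)) (k + (s - L))) by (apply Rmin_pos; lra).
  exists (mkposreal _ He). intros z Hz. change (Rabs (z - s) < Rmin (k - (s - L)) (k + (s - L))) in Hz.
  pose proof (Rmin_l (k - (s - L)) (k + (s - L))). pose proof (Rmin_r (k - (s - L)) (k + (s - L))).
  apply Rabs_def2 in Hz. lra.
Qed.

Lemma inU_I s : 0 <= s <= 2 * L -> inU s.
Proof. intros H. pose proof k_gt_L. unfold inU. lra. Qed.

Lemma z_range s : inU s -> -1 < (s - L) / k < 1.
Proof.
  unfold inU. intros H. pose proof k_gt_L. split.
  - apply Rmult_lt_reg_r with k; [lra|]. unfold Rdiv. rewrite Rmult_assoc, Rinv_l by lra. lra.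
  - apply Rmult_lt_reg_r with k; [lra|]. unfold Rdiv. rewrite Rmult_assoc, Rinv_l by lra. lra.
Qed.

Lemma cos_aa s : inU s -> cos (aa x0 L s) = sqrt (wq s) / k.
Proof.
  intros H. pose proof (z_range s H). pose proof k_gt_L. unfold aa. fold k.
  rewrite cos_asin by lra.
  replace (1 - ((s - L) / k)²) with (wq s / k ^ 2) by (unfold wq, Rsqr; field; lra).
  rewrite sqrt_div_alt by (apply pow_lt; lra). rewrite sqrt_pow2 by lra. reflexivity.
Qed.

Lemma aa_der s : inU s -> is_derive (aa x0 L) s (1 / sqrt (wq s)).
Proof.
  intros H. pose proof (z_range s H). pose proof k_gt_L. pose proof (wq_pos s H).
  unfold aa. fold k.
  evar (d : R).
  assert (Hd : is_derive (fun s => asin ((s - L) / k)) s d).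
  { apply (is_derive_comp asin (fun s => (s - L) / k)). apply is_derive_asin; lra.
    auto_derive; [lra|]. reflexivity. }
  subst d. eapply is_derive_eq; [exact Hd|].
  unfold scal; simpl; unfold mult; simpl.
  replace (1 - ((s - L) / k)²) with (wq s / k ^ 2) by (unfold wq, Rsqr; field; lra).
  rewrite sqrt_div_alt by (apply pow_lt; lra). rewrite sqrt_pow2 by lra.
  assert (0 < sqrt (wq s)) by (apply sqrt_lt_R0; lra). field. split; lra.
Qed.

Lemma sgpos : 0 < sg.
Proof. exact (proj1 sg_bounds). Qed.
Lemma PIsg : 0 < PI - sg.
Proof. pose proof sg_bounds. pose proof PI_RGT_0. lra. Qed.

Lemma gx_alt s : gamma_x x0 L s =
  - (k/2) * (sg/(PI+sg) * sin (th s + aa x0 L s) + sg/(PI-sg) * sin (th s - aa x0 L s)).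
Proof.
  pose proof sgpos. pose proof PIsg. unfold gamma_x, th. fold sg k.
  f_equal. f_equal; f_equal; f_equal; field; lra.
Qed.
Lemma gy_alt s : gamma_y x0 L s =
  (k/2) * (sg/(PI+sg) * cos (th s + aa x0 L s) + sg/(PI-sg) * cos (th s - aa x0 L s))
  + PI * x0 / (sg * tan sg).
Proof.
  pose proof sgpos. pose proof PIsg. unfold gamma_y, th. fold sg k.
  f_equal. f_equal. f_equal; f_equal; f_equal; field; lra.
Qed.

Lemma th_der s : inU s -> is_derive th s (1 / hh s).
Proof.
  intros H. pose proof (aa_der s H). pose proof sgpos. pose proof (wq_pos s H).
  pose proof bt_bounds. assert (0 < sqrt (wq s)) by (apply sqrt_lt_R0; lra).
  unfold th. auto_derive. eexists; eassumption.
  sder H0. unfold hh. rewrite sg_eq. field.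
  pose proof PI_RGT_0. repeat split; lra.
Qed.

Lemma gT1_der s : inU s -> is_derive gT1 s (- gT2 s / hh s).
Proof.
  intros H. pose proof (th_der s H). unfold gT1, gT2. auto_derive. eexists; eassumption.
  sder H0. field.
  unfold hh. pose proof (wq_pos s H). pose proof bt_bounds. assert (0 < sqrt (wq s)) by (apply sqrt_lt_R0; lra). nra.
Qed.

Lemma gT2_der s : inU s -> is_derive gT2 s (gT1 s / hh s).
Proof.
  intros H. pose proof (th_der s H). unfold gT1, gT2. auto_derive. eexists; eassumption.
  sder H0. field.
  unfold hh. pose proof (wq_pos s H). pose proof bt_bounds. assert (0 < sqrt (wq s)) by (apply sqrt_lt_R0; lra). nra.
Qed.

Lemma sq_wq s : inU s -> 0 < sqrt (wq s).
Proof. intros H. apply sqrt_lt_R0, wq_pos, H. Qed.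

Lemma gx_der s : inU s -> is_derive (gamma_x x0 L) s (gT1 s).
Proof.
  intros H. pose proof (th_der s H) as Ht. pose proof (aa_der s H) as Ha.
  pose proof sgpos. pose proof PIsg. pose proof (sq_wq s H). pose proof bt_bounds. pose proof k_gt_L.
  eapply is_derive_ext; [intro; symmetry; apply gx_alt|].
  auto_derive. repeat split; eexists; eassumption.
  sder Ht. sder Ha. change (th s + - aa x0 L s) with (th s - aa x0 L s).
  rewrite cos_plus, cos_minus, (cos_aa s H).
  unfold gT1, hh. rewrite sg_eq in *. field. repeat split; try lra; nra.
Qed.

Lemma gy_der s : inU s -> is_derive (gamma_y x0 L) s (gT2 s).
Proof.
  intros H. pose proof (th_der s H) as Ht. pose proof (aa_der s H) as Ha.
  pose proof sgpos. pose proof PIsg. pose proof (sq_wq s H). pose proof bt_bounds. pose proof k_gt_L.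
  eapply is_derive_ext; [intro; symmetry; apply gy_alt|].
  auto_derive. repeat split; eexists; eassumption.
  sder Ht. sder Ha. change (th s + - aa x0 L s) with (th s - aa x0 L s).
  rewrite sin_plus, sin_minus, (cos_aa s H).
  unfold gT2, hh. rewrite sg_eq in *. field. repeat split; try lra; nra.
Qed.

Lemma hh_der s : inU s -> is_derive hh s (hh1 s).
Proof.
  intros H. pose proof (wq_pos s H). pose proof (sq_wq s H).
  unfold hh, hh1, wq. auto_derive. unfold wq in *; lra.
  replace (k * (k * 1) + - ((s + - L) * ((s + - L) * 1))) with (wq s) by (unfold wq; ring).
  fold (wq s). field. lra.
Qed.

Lemma hh_pos s : inU s -> 0 < hh s.
Proof. intros H. pose proof (sq_wq s H). pose proof bt_bounds. unfold hh. nra. Qed.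

Lemma wq_der s : is_derive wq s (- 2 * (s - L)).
Proof. unfold wq. auto_derive; [exact I|ring]. Qed.

Lemma hh1_der s : inU s -> is_derive hh1 s ((- al - hh1 s ^ 2) / hh s).
Proof.
  intros H. pose proof (wq_pos s H). pose proof (sq_wq s H). pose proof bt_bounds.
  pose proof (wq_der s) as Hw.
  unfold hh, hh1. rewrite <- bt_sq. auto_derive. repeat split; try (eexists; eassumption); lra.
  sder Hw.
  assert (E : sqrt (wq s) ^ 2 = wq s) by (apply pow2_sqrt; lra).
  assert (E2 : wq s = k ^ 2 - (s - L) ^ 2) by reflexivity.
  field. lra.
Qed.

Lemma gT_norm s : gT1 s ^ 2 + gT2 s ^ 2 = 1.
Proof. unfold gT1, gT2. pose proof (sin2_cos2 (th s)). unfold Rsqr in *. nra. Qed.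

Lemma Lk : L / k = sin sg.
Proof. pose proof sin_sg. pose proof k_gt_L. unfold k, kk. fold sg. field. split; lra. Qed.

Lemma aa_0 : aa x0 L 0 = - sg.
Proof.
  pose proof sg_bounds. pose proof PI_RGT_0. unfold aa. fold k.
  replace ((0 - L) / k) with (- (L / k)) by (pose proof k_gt_L; field; lra).
  rewrite Lk, asin_opp, asin_sin; lra.
Qed.
Lemma aa_2L : aa x0 L (2 * L) = sg.
Proof.
  pose proof sg_bounds. pose proof PI_RGT_0. unfold aa. fold k.
  replace ((2 * L - L) / k) with (L / k) by (pose proof k_gt_L; field; lra).
  rewrite Lk, asin_sin; lra.
Qed.

Lemma gT_0 : gT1 0 = 1 /\ gT2 0 = 0.
Proof.
  pose proof sgpos. unfold gT1, gT2, th. rewrite aa_0.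
  replace (PI * - sg / sg) with (- PI) by (field; lra).
  rewrite cos_neg, sin_neg, cos_PI, sin_PI. split; ring.
Qed.
Lemma gT_2L : gT1 (2 * L) = 1 /\ gT2 (2 * L) = 0.
Proof.
  pose proof sgpos. unfold gT1, gT2, th. rewrite aa_2L.
  replace (PI * sg / sg) with PI by (field; lra).
  rewrite cos_PI, sin_PI. split; ring.
Qed.

Lemma d1_gx s : inU s -> d1 (gamma_x x0 L) s = gT1 s.
Proof. intros H. apply is_derive_unique, gx_der, H. Qed.
Lemma d1_gy s : inU s -> d1 (gamma_y x0 L) s = gT2 s.
Proof. intros H. apply is_derive_unique, gy_der, H. Qed.

Lemma d2_gx s : inU s -> d2 (gamma_x x0 L) s = - gT2 s / hh s.
Proof.
  intros H. unfold d2. rewrite (Derive_ext_loc _ gT1).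
  - apply is_derive_unique, gT1_der, H.
  - apply (filter_imp inU); [|apply inU_open, H]. intros z Hz. apply is_derive_unique, gx_der, Hz.
Qed.
Lemma d2_gy s : inU s -> d2 (gamma_y x0 L) s = gT1 s / hh s.
Proof.
  intros H. unfold d2. rewrite (Derive_ext_loc _ gT2).
  - apply is_derive_unique, gT2_der, H.
  - apply (filter_imp inU); [|apply inU_open, H]. intros z Hz. apply is_derive_unique, gy_der, Hz.
Qed.

Lemma speed_g s : inU s -> speed (gamma_x x0 L) (gamma_y x0 L) s = 1.
Proof. intros H. unfold speed. rewrite d1_gx, d1_gy, gT_norm by exact H. apply sqrt_1. Qed.

Lemma curv_g s : inU s -> curvature (gamma_x x0 L) (gamma_y x0 L) s = 1 / hh s.
Proof.
  intros H. unfold curvature. rewrite speed_g, d1_gx, d1_gy, d2_gx, d2_gy by exact H.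
  pose proof (gT_norm s). pose proof (hh_pos s H). field_simplify; try lra.
  replace (gT1 s ^ 2 + gT2 s ^ 2) with 1 by lra. field. lra.
Qed.

Lemma nx_g s : inU s -> normal_x (gamma_x x0 L) (gamma_y x0 L) s = gT2 s.
Proof. intros H. unfold normal_x. rewrite speed_g, d1_gy by exact H. field. Qed.
Lemma ny_g s : inU s -> normal_y (gamma_x x0 L) (gamma_y x0 L) s = - gT1 s.
Proof. intros H. unfold normal_y. rewrite speed_g, d1_gx by exact H. field. Qed.

Lemma lam_al : lambda0 x0 L = 2 - 2 * al.
Proof. unfold lambda0, al. field. lra. Qed.
End Gam.

Definition Gpoly (T1 T2 g1 g2 h h1 al X1 X1s X2 X2s Y1 Y1s Y2 Y2s : R) : R :=
  2*X1*X2 + 2*al*X1*X2 + 2*h1*X2^2 + 4*h*X1*X1s + 4*h*h1*X1s*X2 + (-2)*h^2*X1s*X2s + 1*g2*Y1 + (-1)*g2*al*Y1 + (-1)*g1*Y2 + 1*g1*al*Y2 + 2*T2*h*Y2 + (-2)*T2*h*h1*Y1 + 1*T2*h^2*Y1s + 2*T1*h*Y1 + 2*T1*h*h1*Y2 + (-1)*T1*h^2*Y2s + (-2)*T1*T2*X2^2 + 2*T1*T2*X1^2 + (-2)*T1*T2*al*X2^2 + 2*T1*T2*al*X1^2 + 4*T1*T2*h1*X1*X2 + (-4)*T1*T2*h*X1s*X2 + (-4)*T1*T2*h*X1*X2s + (-4)*T1*T2*h*h1*X2*X2s + 4*T1*T2*h*h1*X1*X1s + 2*T1*T2*h^2*X2s^2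 + (-2)*T1*T2*h^2*X1s^2 + (-4)*T1^2*X1*X2 + (-4)*T1^2*al*X1*X2 + (-2)*T1^2*h1*X2^2 + 2*T1^2*h1*X1^2 + 4*T1^2*h*X2*X2s + (-4)*T1^2*h*X1*X1s + (-4)*T1^2*h*h1*X1s*X2 + (-4)*T1^2*h*h1*X1*X2s + 4*T1^2*h^2*X1s*X2s.
Definition Gder (T1 T2 g1 g2 h h1 al X1 X1s X1ss X2 X2s X2ss Y1 Y1s Y1ss Y2 Y2s Y2ss : R) : R :=
  ((-2)*al*X2^2)/(h) + ((-2)*h1^2*X2^2)/(h) + 2*X1s*X2 + 2*X1*X2s + (-2)*al*X1s*X2 + 2*al*X1*X2s + 4*h1*X2*X2s + 4*h1*X1*X1s + 4*h*X1s^2 + 4*h*X1*X1ss + 4*h*h1*X1ss*X2 + (-2)*h^2*X1ss*X2s + (-2)*h^2*X1s*X2ss + 1*g2*Y1s + (-1)*g2*al*Y1s + (-1)*g1*Y2s + 1*g1*al*Y2s + (-1)*T2*Y1 + 1*T2*al*Y1 + 3*T2*h*Y2s + 1*T2*h^2*Y1ss + (2*T2^2*X2^2)/(h) + ((-2)*T2^2*X1^2)/(h) + (2*T2^2*al*X2^2)/(h) + ((-2)*T2^2*al*X1^2)/(h) + ((-4)*T2^2*h1*X1*X2)/(h) + 4*T2^2*X1s*X2 + 4*T2^2*X1*X2s + 4*T2^2*h1*X2*X2s + (-4)*T2^2*h1*X1*X1s + (-2)*T2^2*h*X2s^2 + 2*T2^2*h*X1s^2 + 1*T1*Y2 + (-1)*T1*al*Y2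 + 3*T1*h*Y1s + (-1)*T1*h^2*Y2ss + (8*T1*T2*X1*X2)/(h) + (4*T1*T2*al*X1*X2)/(h) + (4*T1*T2*h1*X2^2)/(h) + ((-4)*T1*T2*h1*X1^2)/(h) + ((-4)*T1*T2*h1^2*X1*X2)/(h) + (-12)*T1*T2*X2*X2s + 12*T1*T2*X1*X1s + 8*T1*T2*h1*X1s*X2 + 8*T1*T2*h1*X1*X2s + (-4)*T1*T2*h*X1ss*X2 + (-16)*T1*T2*h*X1s*X2s + (-4)*T1*T2*h*X1*X2ss + (-4)*T1*T2*h*h1*X2*X2ss + 4*T1*T2*h*h1*X1*X1ss + 4*T1*T2*h^2*X2s*X2ss + (-4)*T1*T2*h^2*X1s*X1ss + ((-2)*T1^2*X2^2)/(h) + (2*T1^2*X1^2)/(h) + (4*T1^2*h1*X1*X2)/(h) + (2*T1^2*h1^2*X2^2)/(h) + ((-2)*T1^2*h1^2*X1^2)/(h) + (-8)*T1^2*X1s*X2 + (-8)*T1^2*X1*X2s + (-4)*T1^2*h1*X2*X2s + 4*T1^2*h1*X1*X1s + 6*T1^2*h*X2s^2 + 4*T1^2*h*X2*X2ss + (-6)*T1^2*h*X1s^2 + (-4)*T1^2*h*X1*X1ss + (-4)*T1^2*h*h1*X1ss*X2 + (-4)*T1^2*h*h1*X1*X2ss + 4*T1^2*h^2*X1ss*X2s + 4*T1^2*h^2*X1s*X2ss.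
Definition Kpoly (T1 T2 g1 g2 h h1 al X1 X1s X1ss X2 X2s X2ss Y1 Y1s Y1ss Y2 Y2s Y2ss : R) : R :=
  ((-2)*al*X2^2)/(h) + ((-2)*h1^2*X2^2)/(h) + 4*X1*X2s + 4*h1*X2*X2s + 4*h1*X1*X1s + (-4)*h*X2s^2 + 4*h*X1*X1ss + 4*h*h1*X1ss*X2 + (-4)*h^2*X1ss*X2s.
Definition Qs (T1 T2 g1 g2 h h1 al X1 X1s X1ss X2 X2s X2ss Y1 Y1s Y1ss Y2 Y2s Y2ss : R) : R :=
  2*X1s*X2 + (-2)*X1*X2s + (-2)*al*X1s*X2 + 2*al*X1*X2s + 4*h*X2s^2 + 4*h*X1s^2 + 2*h^2*X1ss*X2s + (-2)*h^2*X1s*X2ss + 1*g2*Y1s + (-1)*g2*al*Y1s + (-1)*g1*Y2s + 1*g1*al*Y2s + (-1)*T2*Y1 + 1*T2*al*Y1 + 3*T2*h*Y2s + 1*T2*h^2*Y1ss + 2*T2^2*h*X2s^2 + 4*T2^2*h^2*X1ss*X2s + 2*T2^2*h^3*X1ss^2 + 1*T1*Y2 + (-1)*T1*al*Y2 + 3*T1*h*Y1s + (-1)*T1*h^2*Y2ss + 4*T1*T2*h*X1s*X2s + (-4)*T1*T2*h^2*X2s*X2ss + 4*T1*T2*h^2*X1s*X1ss + (-4)*T1*T2*h^3*X1ss*X2ss + 2*T1^2*h*X1s^2 + (-4)*T1^2*h^2*X1s*X2ss + 2*T1^2*h^3*X2ss^2.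
Definition phi1e (T1 T2 g1 g2 h h1 al X1 X1s X1ss X2 X2s X2ss Y1 Y1s Y1ss Y2 Y2s Y2ss : R) : R :=
  (1*T2*X2)/(h) + 1*T2*X1s + (1*T1*X1)/(h) + (-1)*T1*X2s.
Definition phi2e (T1 T2 g1 g2 h h1 al X1 X1s X1ss X2 X2s X2ss Y1 Y1s Y1ss Y2 Y2s Y2ss : R) : R :=
  ((-1)*T2*X1)/(h^2) + ((-1)*T2*h1*X2)/(h^2) + (2*T2*X2s)/(h) + 1*T2*X1ss + (1*T1*X2)/(h^2) + ((-1)*T1*h1*X1)/(h^2) + (2*T1*X1s)/(h) + (-1)*T1*X2ss.
Definition Pexpr (T1 T2 g1 g2 h h1 al X1 X1s X1ss X2 X2s X2ss Y1 Y1s Y1ss Y2 Y2s Y2ss : R) : R :=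
  (2 - (2 - 2 * al)) * (1 / h) * (X1 * T2 - X2 * T1) ^ 2
  - 2 * (phi1e T1 T2 g1 g2 h h1 al X1 X1s X1ss X2 X2s X2ss Y1 Y1s Y1ss Y2 Y2s Y2ss) ^ 2 / (1 / h)
  + 2 * (phi2e T1 T2 g1 g2 h h1 al X1 X1s X1ss X2 X2s X2ss Y1 Y1s Y1ss Y2 Y2s Y2ss) ^ 2 / (1 / h) ^ 3.

Lemma Qs_eq T1 T2 g1 g2 h h1 al X1 X1s X1ss X2 X2s X2ss Y1 Y1s Y1ss Y2 Y2s Y2ss :
  T1^2+T2^2 = 1 -> h <> 0 ->
  eR2 (1 - al) T1 T2 (-T2/h) (T1/h) g1 g2 X1s X2s X1ss X2ss X1 X2 Y1s Y2s Y1ss Y2ss Y1 Y2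
  = Qs T1 T2 g1 g2 h h1 al X1 X1s X1ss X2 X2s X2ss Y1 Y1s Y1ss Y2 Y2s Y2ss.
Proof.
  intros Hn Hh. unfold eR2. cbv zeta. rewrite Hn.
  replace (T1 * (T1 / h) - T2 * (- T2 / h)) with ((T1^2+T2^2) / h) by (field; exact Hh). rewrite Hn.
  unfold Qs. field. exact Hh.
Qed.

Lemma key_id T1 T2 g1 g2 h h1 al X1 X1s X1ss X2 X2s X2ss Y1 Y1s Y1ss Y2 Y2s Y2ss :
  T1^2+T2^2 = 1 -> h <> 0 ->
  Qs T1 T2 g1 g2 h h1 al X1 X1s X1ss X2 X2s X2ss Y1 Y1s Y1ss Y2 Y2s Y2ss
  - Pexpr T1 T2 g1 g2 h h1 al X1 X1s X1ss X2 X2s X2ss Y1 Y1s Y1ss Y2 Y2s Y2ss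
  = Gder T1 T2 g1 g2 h h1 al X1 X1s X1ss X2 X2s X2ss Y1 Y1s Y1ss Y2 Y2s Y2ss.
Proof.
  intros Hn Hh.
  assert (E : Qs T1 T2 g1 g2 h h1 al X1 X1s X1ss X2 X2s X2ss Y1 Y1s Y1ss Y2 Y2s Y2ss
  - Pexpr T1 T2 g1 g2 h h1 al X1 X1s X1ss X2 X2s X2ss Y1 Y1s Y1ss Y2 Y2s Y2ss
  - Gder T1 T2 g1 g2 h h1 al X1 X1s X1ss X2 X2s X2ss Y1 Y1s Y1ss Y2 Y2s Y2ss
  = (T1^2+T2^2-1) * Kpoly T1 T2 g1 g2 h h1 al X1 X1s X1ss X2 X2s X2ss Y1 Y1s Y1ss Y2 Y2s Y2ss).
  { unfold Qs, Pexpr, phi1e, phi2e, Gder, Kpoly. field. exact Hh. }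
  rewrite Hn in E. lra.
Qed.

Lemma dplus (f g : R -> R) x a b : is_derive f x a -> is_derive g x b -> is_derive (fun t => f t + g t) x (a + b).
Proof. intros. apply (is_derive_plus f g); assumption. Qed.
Lemma dminus (f g : R -> R) x a b : is_derive f x a -> is_derive g x b -> is_derive (fun t => f t - g t) x (a - b).
Proof. intros. apply (is_derive_minus f g); assumption. Qed.
Lemma dopp (f : R -> R) x a : is_derive f x a -> is_derive (fun t => - f t) x (- a).
Proof. intros. apply (is_derive_opp f); assumption. Qed.
Lemma dmult (f g : R -> R) x a b : is_derive f x a -> is_derive g x b -> is_derive (fun t => f t * g t) x (a * g x + f x * b).
Proof. intros. apply (is_derive_mult f g); try assumption. intros; apply Rmult_comm. Qed.
Lemma dconst (c : R) x : is_derive (fun _ => c) x 0.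
Proof. apply (is_derive_const (K := R_AbsRing) (V := R_NormedModule)). Qed.
Lemma dpow (f : R -> R) (n : nat) x a : is_derive f x a -> is_derive (fun t => f t ^ n) x (INR n * a * f x ^ (pred n)).
Proof. intros H. eapply is_derive_eq. apply (is_derive_pow f n x a H). unfold scal; simpl; unfold mult; simpl. ring. Qed.

Lemma dsq (f : R -> R) x a : is_derive f x a -> is_derive (fun t => f t ^ 2) x (2 * a * f x).
Proof. intros H. eapply is_derive_eq. apply (dpow f 2 x a H). simpl. ring. Qed.

Ltac dt :=
  match goal with
  | |- is_derive (fun t => ?f t) _ _ => is_var f; eassumption
  | |- is_derive ?f _ _ => is_var f; eassumption
  | |- is_derive (fun t => @?F t + @?G t) _ _ => eapply (dplus F G); [dt|dt]
  | |- is_derive (fun t => @?F t - @?G t) _ _ => eapply (dminus F G); [dt|dt]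
  | |- is_derive (fun t => @?F t * @?G t) _ _ => eapply (dmult F G); [dt|dt]
  | |- is_derive (fun t => - @?F t) _ _ => eapply (dopp F); dt
  | |- is_derive (fun t => @?F t ^ 2) _ _ => eapply (dsq F); dt
  | |- is_derive (fun t => @?F t ^ ?n) _ _ => eapply (dpow F n); dt
  | |- is_derive (fun t => ?c) _ _ => apply dconst
  end.

Lemma Gpoly_der (T1 T2 g1 g2 h h1 X1 X1s X1ss X2 X2s X2ss Y1 Y1s Y1ss Y2 Y2s Y2ss : R -> R) al s :
  is_derive T1 s (- T2 s / h s) -> is_derive T2 s (T1 s / h s) ->
  is_derive g1 s (T1 s) -> is_derive g2 s (T2 s) ->
  is_derive h s (h1 s) -> is_derive h1 s ((- al - h1 s ^ 2) / h s) ->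
  is_derive X1 s (X1s s) -> is_derive X1s s (X1ss s) -> is_derive X2 s (X2s s) -> is_derive X2s s (X2ss s) ->
  is_derive Y1 s (Y1s s) -> is_derive Y1s s (Y1ss s) -> is_derive Y2 s (Y2s s) -> is_derive Y2s s (Y2ss s) ->
  h s <> 0 ->
  is_derive (fun s => Gpoly (T1 s) (T2 s) (g1 s) (g2 s) (h s) (h1 s) al (X1 s) (X1s s) (X2 s) (X2s s)
                        (Y1 s) (Y1s s) (Y2 s) (Y2s s)) s
    (Gder (T1 s) (T2 s) (g1 s) (g2 s) (h s) (h1 s) al (X1 s) (X1s s) (X1ss s) (X2 s) (X2s s) (X2ss s)
          (Y1 s) (Y1s s) (Y1ss s) (Y2 s) (Y2s s) (Y2ss s)).
Proof.
  intros D1 D2 D3 D4 D5 D6 D7 D8 D9 D10 D11 D12 D13 D14 Hh.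
  unfold Gpoly. eapply is_derive_eq; [dt|].
  unfold Gder. field. exact Hh.
Qed.


Lemma c1plus (f g : R -> R) x : continuous f x -> continuous g x -> continuous (fun t => f t + g t) x.
Proof. intros. apply (continuous_plus f g); assumption. Qed.
Lemma c1minus (f g : R -> R) x : continuous f x -> continuous g x -> continuous (fun t => f t - g t) x.
Proof. intros. apply (continuous_minus f g); assumption. Qed.
Lemma c1mult (f g : R -> R) x : continuous f x -> continuous g x -> continuous (fun t => f t * g t) x.
Proof. intros. apply (continuous_mult f g); assumption. Qed.
Lemma c1opp (f : R -> R) x : continuous f x -> continuous (fun t => - f t) x.
Proof. intros. apply (continuous_opp f); assumption. Qed.
Lemma c1inv (f : R -> R) x : continuous f x -> f x <> 0 -> continuous (fun t => / f t) x.
Proof. intros. apply continuous_Rinv_comp; assumption. Qed.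
Lemma c1const (c : R) x : continuous (fun _ : R => c) x.
Proof. apply continuous_const. Qed.
Lemma c1pow (f : R -> R) n x : continuous f x -> continuous (fun t => f t ^ n) x.
Proof. intros H. induction n; simpl. apply c1const. apply (c1mult f (fun t => f t ^ n)); assumption. Qed.
Lemma c1div (f g : R -> R) x : continuous f x -> continuous g x -> g x <> 0 -> continuous (fun t => f t / g t) x.
Proof. intros. apply (c1mult f (fun t => / g t)); [assumption|]. apply c1inv; assumption. Qed.

Ltac c1d :=
  match goal with
  | |- continuous (fun t => ?f t) _ => is_var f; first [assumption | (apply ex_derive_continuous; eexists; eassumption)]
  | |- continuous ?f _ => is_var f; first [assumption | (apply ex_derive_continuous; eexists; eassumption)]
  | |- continuous (fun t => @?F t + @?G t) _ => apply (c1plus F G); c1d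
  | |- continuous (fun t => @?F t - @?G t) _ => apply (c1minus F G); c1d
  | |- continuous (fun t => @?F t * @?G t) _ => apply (c1mult F G); c1d
  | |- continuous (fun t => @?F t / @?G t) _ => apply (c1div F G); [c1d|c1d|]
  | |- continuous (fun t => - @?F t) _ => apply (c1opp F); c1d
  | |- continuous (fun t => / @?F t) _ => apply (c1inv F); [c1d|]
  | |- continuous (fun t => @?F t ^ ?n) _ => apply (c1pow F n); c1d
  | |- continuous (fun t => ?c) _ => apply c1const
  end.

Lemma Fint_eq a1 a2 b1 b2 :
  sqrt (a1 ^ 2 + a2 ^ 2) / ((a1 * b2 - a2 * b1) / sqrt (a1 ^ 2 + a2 ^ 2) ^ 3)
  = (a1 ^ 2 + a2 ^ 2) ^ 2 / (a1 * b2 - a2 * b1).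
Proof.
  destruct (Req_dec (a1 * b2 - a2 * b1) 0) as [Hc|Hc].
  - rewrite Hc. unfold Rdiv. rewrite !Rmult_0_l, Rinv_0, !Rmult_0_r. reflexivity.
  - assert (Hq : 0 < a1 ^ 2 + a2 ^ 2).
    { destruct (Req_dec a1 0) as [E1|E1]; [destruct (Req_dec a2 0) as [E2|E2]|].
      - exfalso. apply Hc. rewrite E1, E2. ring.
      - pose proof (pow2_gt_0 a2 E2). nra.
      - pose proof (pow2_gt_0 a1 E1). nra. }
    assert (Hs : 0 < sqrt (a1 ^ 2 + a2 ^ 2)) by (apply sqrt_lt_R0; exact Hq).
    assert (Es : sqrt (a1 ^ 2 + a2 ^ 2) ^ 2 = a1 ^ 2 + a2 ^ 2) by (apply pow2_sqrt; lra).
    set (q := a1 ^ 2 + a2 ^ 2) in *. set (S := sqrt q) in *. rewrite <- Es. field. split; lra.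
Qed.

Section Main.
Variables (x0 L : R) (Vx Vy : R -> R -> R) (T : R).
Hypothesis Hx0 : 0 < 3 * x0.
Hypothesis HL : 3 * x0 < L.
Hypothesis Hadm : admissible_variation x0 L (gamma_x x0 L) (gamma_y x0 L) Vx Vy T.

Lemma HT : 0 < T. Proof. apply Hadm. Qed.
Lemma HVx : smooth2 Vx. Proof. apply Hadm. Qed.
Lemma HVy : smooth2 Vy. Proof. apply Hadm. Qed.
Lemma Hg0 : forall s, 0 <= s <= 2 * L -> Vx s 0 = gamma_x x0 L s /\ Vy s 0 = gamma_y x0 L s.
Proof. apply Hadm. Qed.
Lemma Hcurve : forall t, -T <= t <= T -> admissible_curve x0 L (fun s => Vx s t) (fun s => Vy s t).
Proof. apply Hadm. Qed.

Definition mu0 := lambda0 x0 L / 2.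

Definition EE (t : R) := funcF L (fun s => Vx s t) (fun s => Vy s t)
   - lambda0 x0 L * areaA L (fun s => Vx s t) (fun s => Vy s t).

Lemma cc_pos t s : -T <= t <= T -> 0 <= s <= 2 * L -> cc Vx Vy t s <> 0.
Proof.
  intros Ht Hs. destruct (Hcurve t Ht) as [_ [_ [Hk _]]]. specialize (Hk s Hs).
  unfold curvature in Hk. intros E. unfold cc in E.
  unfold d1, d2 in Hk. change (Derive (fun s0 => Vx s0 t) s) with (pds Vx s t) in Hk.
  change (Derive (fun s0 => Vy s0 t) s) with (pds Vy s t) in Hk.
  change (Derive (Derive (fun s0 => Vx s0 t)) s) with (pds (pds Vx) s t) in Hk.
  change (Derive (Derive (fun s0 => Vy s0 t)) s) with (pds (pds Vy) s t) in Hk.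
  rewrite E in Hk. unfold Rdiv in Hk. rewrite Rmult_0_l in Hk. lra.
Qed.

Lemma Om_in t s : -T < t < T -> 0 <= s <= 2 * L -> Om Vx Vy T t s.
Proof. intros Ht Hs. split; [exact Ht|]. apply cc_pos; [lra|exact Hs]. Qed.

Lemma area_cont t s : continuity_2d_pt (fun t s => Vx s t * pds Vy s t - pds Vx s t * Vy s t) t s.
Proof. pose proof HVx. pose proof HVy. c2d. Qed.

Lemma EE_eq t : -T < t < T -> EE t = RInt (fun s => ff Vx Vy mu0 t s) 0 (2 * L).
Proof.
  intros Ht. pose proof HVx. pose proof HVy.
  assert (HA : ex_RInt (fun s => Vx s t * pds Vy s t - pds Vx s t * Vy s t) 0 (2 * L)).
  { apply (ex_RInt_continuous (V := R_CompleteNormedModule)). intros z Hz.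
    apply (cont2d_cont1 (fun t s => Vx s t * pds Vy s t - pds Vx s t * Vy s t)). apply area_cont. }
  assert (HF : ex_RInt (fun s => (pds Vx s t ^ 2 + pds Vy s t ^ 2) ^ 2 /
                  (pds Vx s t * pds (pds Vy) s t - pds Vy s t * pds (pds Vx) s t)) 0 (2 * L)).
  { apply (ex_RInt_continuous (V := R_CompleteNormedModule)). intros z Hz.
    rewrite Rmin_left in Hz by lra. rewrite Rmax_right in Hz by lra.
    apply (cont2d_cont1 (fun t s => (pds Vx s t ^ 2 + pds Vy s t ^ 2) ^ 2 /
                  (pds Vx s t * pds (pds Vy) s t - pds Vy s t * pds (pds Vx) s t))).
    c2d. apply cc_pos; lra. }
  unfold EE, funcF, areaA, speed, curvature, d1, d2.
  change (fun s => Vx s t * Derive (fun s0 => Vy s0 t) s - Derive (fun s0 => Vx s0 t) s * Vy s t) with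
    (fun s => Vx s t * pds Vy s t - pds Vx s t * Vy s t).
  rewrite (RInt_ext _ (fun s => (pds Vx s t ^ 2 + pds Vy s t ^ 2) ^ 2 /
                  (pds Vx s t * pds (pds Vy) s t - pds Vy s t * pds (pds Vx) s t))).
  2: { intros s _. apply Fint_eq. }
  unfold ff, eR. 
  rewrite (RInt_minus (V := R_CompleteNormedModule) _ (fun s => mu0 * (Vx s t * pds Vy s t - pds Vx s t * Vy s t))); auto.
  2: { apply (ex_RInt_scal (V := R_CompleteNormedModule) _ _ _ mu0) in HA. exact HA. }
  rewrite (RInt_scal (V := R_CompleteNormedModule) _ _ _ mu0) by exact HA.
  unfold minus, plus, opp, scal; simpl. unfold mult; simpl. unfold mu0. field.
Qed.

Lemma EE_ders :
  (forall t, -T < t < T -> is_derive EE t (RInt (fun s => ff1 Vx Vy mu0 t s) 0 (2 * L))) /\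
  is_derive (Derive EE) 0 (RInt (fun s => ff2 Vx Vy mu0 0 s) 0 (2 * L)).
Proof.
  pose proof HVx as HX. pose proof HVy as HY. pose proof HT as HT0.
  destruct (D2_main (ff Vx Vy mu0) (ff1 Vx Vy mu0) (ff2 Vx Vy mu0) 0 (2 * L) T (Om Vx Vy T))
    as [D1 D2].
  - lra.
  - apply Om_open; assumption.
  - intros t s Ht Hs. apply Om_in; assumption.
  - apply ff_der; assumption.
  - apply ff1_der; assumption.
  - apply ff_cont; assumption.
  - apply ff1_cont; assumption.
  - apply ff2_cont; assumption.
  - assert (E1 : forall t, -T < t < T -> is_derive EE t (RInt (fun s => ff1 Vx Vy mu0 t s) 0 (2 * L))).
    { intros t Ht. apply (is_derive_ext_loc (fun z => RInt (fun s => ff Vx Vy mu0 z s) 0 (2 * L))).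
      - apply (filter_imp (fun z => -T < z < T)); [|apply (locT T t); exact Ht].
        intros z Hz. symmetry. apply EE_eq. exact Hz.
      - apply D1. exact Ht. }
    split; [exact E1|].
    apply (is_derive_ext_loc (fun z => RInt (fun s => ff1 Vx Vy mu0 z s) 0 (2 * L))).
    + apply (filter_imp (fun z => -T < z < T)); [|apply (locT T 0); lra].
      intros z Hz. symmetry. apply is_derive_unique. apply E1. exact Hz.
    + apply D2. lra.
Qed.

Lemma loc_int a b s : a < s < b -> locally s (fun u => a < u < b).
Proof.
  intros H. assert (He : 0 < Rmin (b - s) (s - a)) by (apply Rmin_pos; lra).
  exists (mkposreal _ He). intros z Hz. change (Rabs (z - s) < Rmin (b - s) (s - a)) in Hz.
  pose proof (Rmin_l (b - s) (s - a)). pose proof (Rmin_r (b - s) (s - a)).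
  apply Rabs_def2 in Hz. lra.
Qed.

Lemma sw1 f : smooth2 f -> pdt (pds f) = pds (pdt f).
Proof. intros H. symmetry. apply smooth2_schwarz_fun, H. Qed.
Lemma sw2 f : smooth2 f -> pdt (pds (pds f)) = pds (pds (pdt f)).
Proof. intros H. rewrite (sw1 (pds f)) by auto with smooth. rewrite (sw1 f H). reflexivity. Qed.
Lemma sw3 f : smooth2 f -> pdt (pdt (pds f)) = pds (pdt (pdt f)).
Proof. intros H. rewrite (sw1 f H). apply sw1. auto with smooth. Qed.
Lemma sw4 f : smooth2 f -> pdt (pdt (pds (pds f))) = pds (pds (pdt (pdt f))).
Proof. intros H. rewrite (sw2 f H). apply sw2. auto with smooth. Qed.

Lemma V0_int s : 0 < s < 2 * L -> locally s (fun u => Vx u 0 = gamma_x x0 L u /\ Vy u 0 = gamma_y x0 L u).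
Proof.
  intros Hs. apply (filter_imp (fun u => 0 < u < 2 * L)); [|apply loc_int; exact Hs].
  intros u Hu. apply Hg0. lra.
Qed.

Lemma A_x s : 0 < s < 2 * L -> pds Vx s 0 = gT1 x0 L s.
Proof.
  intros Hs. unfold pds. rewrite (Derive_ext_loc _ (gamma_x x0 L)).
  - apply is_derive_unique, gx_der; auto. apply inU_I; auto; lra.
  - apply (filter_imp _ _ (fun u H => proj1 H) (V0_int s Hs)).
Qed.
Lemma A_y s : 0 < s < 2 * L -> pds Vy s 0 = gT2 x0 L s.
Proof.
  intros Hs. unfold pds. rewrite (Derive_ext_loc _ (gamma_y x0 L)).
  - apply is_derive_unique, gy_der; auto. apply inU_I; auto; lra.
  - apply (filter_imp _ _ (fun u H => proj2 H) (V0_int s Hs)).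
Qed.
Lemma B_x s : 0 < s < 2 * L -> pds (pds Vx) s 0 = - gT2 x0 L s / hh x0 L s.
Proof.
  intros Hs. unfold pds at 1. rewrite (Derive_ext_loc _ (gT1 x0 L)).
  - apply is_derive_unique, gT1_der; auto. apply inU_I; auto; lra.
  - apply (filter_imp (fun u => 0 < u < 2 * L)); [|apply loc_int; exact Hs]. intros u Hu. apply A_x, Hu.
Qed.
Lemma B_y s : 0 < s < 2 * L -> pds (pds Vy) s 0 = gT1 x0 L s / hh x0 L s.
Proof.
  intros Hs. unfold pds at 1. rewrite (Derive_ext_loc _ (gT2 x0 L)).
  - apply is_derive_unique, gT2_der; auto. apply inU_I; auto; lra.
  - apply (filter_imp (fun u => 0 < u < 2 * L)); [|apply loc_int; exact Hs]. intros u Hu. apply A_y, Hu.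
Qed.

Definition QsV s := Qs (gT1 x0 L s) (gT2 x0 L s) (gamma_x x0 L s) (gamma_y x0 L s) (hh x0 L s) (hh1 x0 L s) (al x0 L)
  (pdt Vx s 0) (pds (pdt Vx) s 0) (pds (pds (pdt Vx)) s 0)
  (pdt Vy s 0) (pds (pdt Vy) s 0) (pds (pds (pdt Vy)) s 0)
  (pdt (pdt Vx) s 0) (pds (pdt (pdt Vx)) s 0) (pds (pds (pdt (pdt Vx))) s 0)
  (pdt (pdt Vy) s 0) (pds (pdt (pdt Vy)) s 0) (pds (pds (pdt (pdt Vy))) s 0).

Lemma ff2_at0 s : 0 < s < 2 * L -> ff2 Vx Vy mu0 0 s = QsV s.
Proof.
  intros Hs. pose proof HVx as HX. pose proof HVy as HY.
  unfold ff2. rewrite (sw4 Vx HX), (sw4 Vy HY), (sw3 Vx HX), (sw3 Vy HY), (sw2 Vx HX), (sw2 Vy HY),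
    (sw1 Vx HX), (sw1 Vy HY).
  rewrite (A_x s Hs), (A_y s Hs), (B_x s Hs), (B_y s Hs).
  destruct (Hg0 s ltac:(lra)) as [E1 E2]. rewrite E1, E2.
  replace mu0 with (1 - al x0 L) by (unfold mu0; rewrite lam_al by auto; field).
  unfold QsV. apply Qs_eq.
  - apply gT_norm.
  - apply Rgt_not_eq, hh_pos; auto. apply inU_I; auto; lra.
Qed.

Lemma ddiv (f g : R -> R) x a b : is_derive f x a -> is_derive g x b -> g x <> 0 ->
  is_derive (fun t => f t / g t) x ((a * g x - f x * b) / g x ^ 2).
Proof.
  intros Hf Hg Hn. exact (is_derive_div f g x a b Hf Hg Hn).
Qed.

Ltac dt2 :=
  match goal with
  | |- is_derive (fun t => ?f t) _ _ => is_var f; eassumption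
  | |- is_derive ?f _ _ => is_var f; eassumption
  | |- is_derive (fun t => @?F t + @?G t) _ _ => eapply (dplus F G); [dt2|dt2]
  | |- is_derive (fun t => @?F t - @?G t) _ _ => eapply (dminus F G); [dt2|dt2]
  | |- is_derive (fun t => @?F t * @?G t) _ _ => eapply (dmult F G); [dt2|dt2]
  | |- is_derive (fun t => @?F t / @?G t) _ _ => eapply (ddiv F G); [dt2|dt2|]
  | |- is_derive (fun t => - @?F t) _ _ => eapply (dopp F); dt2
  | |- is_derive (fun t => @?F t ^ 2) _ _ => eapply (dsq F); dt2
  | |- is_derive (fun t => @?F t ^ ?n) _ _ => eapply (dpow F n); dt2
  | |- is_derive (fun t => ?c) _ _ => apply dconst
  end.

Section Generic.
Variables (T1 T2 g1 g2 h h1 X1 X1s X1ss X2 X2s X2ss Y1 Y1s Y1ss Y2 Y2s Y2ss : R -> R) (al s : R).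
Hypotheses (D1 : is_derive T1 s (- T2 s / h s)) (D2 : is_derive T2 s (T1 s / h s))
  (D5 : is_derive h s (h1 s)) (D6 : is_derive h1 s ((- al - h1 s ^ 2) / h s))
  (D7 : is_derive X1 s (X1s s)) (D8 : is_derive X1s s (X1ss s))
  (D9 : is_derive X2 s (X2s s)) (D10 : is_derive X2s s (X2ss s))
  (D11 : is_derive Y1 s (Y1s s)) (D13 : is_derive Y2 s (Y2s s))
  (Hh : h s <> 0).

Lemma phi1_der : is_derive (fun s => X1 s * T2 s + X2 s * (- T1 s)) s
  (phi1e (T1 s) (T2 s) (g1 s) (g2 s) (h s) (h1 s) al (X1 s) (X1s s) (X1ss s) (X2 s) (X2s s) (X2ss s)
    (Y1 s) (Y1s s) (Y1ss s) (Y2 s) (Y2s s) (Y2ss s)).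
Proof. eapply is_derive_eq; [dt2|]. unfold phi1e. field. exact Hh. Qed.

Lemma phi2_der : is_derive (fun s => phi1e (T1 s) (T2 s) (g1 s) (g2 s) (h s) (h1 s) al (X1 s) (X1s s) (X1ss s) (X2 s) (X2s s) (X2ss s)
    (Y1 s) (Y1s s) (Y1ss s) (Y2 s) (Y2s s) (Y2ss s)) s
  (phi2e (T1 s) (T2 s) (g1 s) (g2 s) (h s) (h1 s) al (X1 s) (X1s s) (X1ss s) (X2 s) (X2s s) (X2ss s)
    (Y1 s) (Y1s s) (Y1ss s) (Y2 s) (Y2s s) (Y2ss s)).
Proof.
  unfold phi1e. eapply is_derive_eq; [dt2|..]; try exact Hh. unfold phi2e. field. exact Hh.
Qed.

Lemma psi1_der : is_derive (fun s => Y1 s * T2 s + Y2 s * (- T1 s)) s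
  (Y1s s * T2 s + Y1 s * (T1 s / h s) + (Y2s s * (- T1 s) + Y2 s * (T2 s / h s))).
Proof. eapply is_derive_eq; [dt2|]. field. exact Hh. Qed.
End Generic.

Lemma Gder_cont (T1 T2 g1 g2 h h1 X1 X1s X1ss X2 X2s X2ss Y1 Y1s Y1ss Y2 Y2s Y2ss : R -> R) (al s : R) :
  continuous T1 s -> continuous T2 s -> continuous g1 s -> continuous g2 s -> continuous h s -> continuous h1 s ->
  continuous X1 s -> continuous X1s s -> continuous X1ss s -> continuous X2 s -> continuous X2s s -> continuous X2ss s ->
  continuous Y1 s -> continuous Y1s s -> continuous Y1ss s -> continuous Y2 s -> continuous Y2s s -> continuous Y2ss s ->
  h s <> 0 ->
  continuous (fun s => Gder (T1 s) (T2 s) (g1 s) (g2 s) (h s) (h1 s) al (X1 s) (X1s s) (X1ss s) (X2 s) (X2s s) (X2ss s)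
    (Y1 s) (Y1s s) (Y1ss s) (Y2 s) (Y2s s) (Y2ss s)) s.
Proof.
  intros. unfold Gder. c1d; try assumption; try (apply pow_nonzero; assumption).
Qed.

Definition GV s := Gpoly (gT1 x0 L s) (gT2 x0 L s) (gamma_x x0 L s) (gamma_y x0 L s) (hh x0 L s) (hh1 x0 L s) (al x0 L)
  (pdt Vx s 0) (pds (pdt Vx) s 0) (pdt Vy s 0) (pds (pdt Vy) s 0)
  (pdt (pdt Vx) s 0) (pds (pdt (pdt Vx)) s 0) (pdt (pdt Vy) s 0) (pds (pdt (pdt Vy)) s 0).
Definition GdV s := Gder (gT1 x0 L s) (gT2 x0 L s) (gamma_x x0 L s) (gamma_y x0 L s) (hh x0 L s) (hh1 x0 L s) (al x0 L)
  (pdt Vx s 0) (pds (pdt Vx) s 0) (pds (pds (pdt Vx)) s 0)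
  (pdt Vy s 0) (pds (pdt Vy) s 0) (pds (pds (pdt Vy)) s 0)
  (pdt (pdt Vx) s 0) (pds (pdt (pdt Vx)) s 0) (pds (pds (pdt (pdt Vx))) s 0)
  (pdt (pdt Vy) s 0) (pds (pdt (pdt Vy)) s 0) (pds (pds (pdt (pdt Vy))) s 0).
Definition PV s := Pexpr (gT1 x0 L s) (gT2 x0 L s) (gamma_x x0 L s) (gamma_y x0 L s) (hh x0 L s) (hh1 x0 L s) (al x0 L)
  (pdt Vx s 0) (pds (pdt Vx) s 0) (pds (pds (pdt Vx)) s 0)
  (pdt Vy s 0) (pds (pdt Vy) s 0) (pds (pds (pdt Vy)) s 0)
  (pdt (pdt Vx) s 0) (pds (pdt (pdt Vx)) s 0) (pds (pds (pdt (pdt Vx))) s 0)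
  (pdt (pdt Vy) s 0) (pds (pdt (pdt Vy)) s 0) (pds (pds (pdt (pdt Vy))) s 0).

Lemma dsm f s : smooth2 f -> is_derive (fun u => f u 0) s (pds f s 0).
Proof. intros H. apply smooth2_ds, H. Qed.

Lemma GV_der s : inU x0 L s -> is_derive GV s (GdV s).
Proof.
  intros Hs. pose proof HVx as HX. pose proof HVy as HY. unfold GV, GdV.
  apply (Gpoly_der (gT1 x0 L) (gT2 x0 L) (gamma_x x0 L) (gamma_y x0 L) (hh x0 L) (hh1 x0 L)
    (fun s => pdt Vx s 0) (fun s => pds (pdt Vx) s 0) (fun s => pds (pds (pdt Vx)) s 0)
    (fun s => pdt Vy s 0) (fun s => pds (pdt Vy) s 0) (fun s => pds (pds (pdt Vy)) s 0)
    (fun s => pdt (pdt Vx) s 0) (fun s => pds (pdt (pdt Vx)) s 0) (fun s => pds (pds (pdt (pdt Vx))) s 0)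
    (fun s => pdt (pdt Vy) s 0) (fun s => pds (pdt (pdt Vy)) s 0) (fun s => pds (pds (pdt (pdt Vy))) s 0)).
  - apply gT1_der; auto.
  - apply gT2_der; auto.
  - apply gx_der; auto.
  - apply gy_der; auto.
  - apply hh_der; auto.
  - apply hh1_der; auto.
  - apply dsm; auto with smooth.
  - apply dsm; auto with smooth.
  - apply dsm; auto with smooth.
  - apply dsm; auto with smooth.
  - apply dsm; auto with smooth.
  - apply dsm; auto with smooth.
  - apply dsm; auto with smooth.
  - apply dsm; auto with smooth.
  - apply Rgt_not_eq, hh_pos; auto.
Qed.

Lemma cd (f : R -> R) s l : is_derive f s l -> continuous f s.
Proof. intros H. apply (ex_derive_continuous (K := R_AbsRing) (V := R_NormedModule)). exists l. exact H. Qed.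

Lemma GdV_cont s : inU x0 L s -> continuous GdV s.
Proof.
  intros Hs. pose proof HVx as HX. pose proof HVy as HY. unfold GdV.
  apply (Gder_cont (gT1 x0 L) (gT2 x0 L) (gamma_x x0 L) (gamma_y x0 L) (hh x0 L) (hh1 x0 L)
    (fun s => pdt Vx s 0) (fun s => pds (pdt Vx) s 0) (fun s => pds (pds (pdt Vx)) s 0)
    (fun s => pdt Vy s 0) (fun s => pds (pdt Vy) s 0) (fun s => pds (pds (pdt Vy)) s 0)
    (fun s => pdt (pdt Vx) s 0) (fun s => pds (pdt (pdt Vx)) s 0) (fun s => pds (pds (pdt (pdt Vx))) s 0)
    (fun s => pdt (pdt Vy) s 0) (fun s => pds (pdt (pdt Vy)) s 0) (fun s => pds (pds (pdt (pdt Vy))) s 0)).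
  - eapply cd; apply gT1_der; auto.
  - eapply cd; apply gT2_der; auto.
  - eapply cd; apply gx_der; auto.
  - eapply cd; apply gy_der; auto.
  - eapply cd; apply hh_der; auto.
  - eapply cd; apply hh1_der; auto.
  all: try (apply Rgt_not_eq, hh_pos; auto; fail).
  all: eapply cd; apply dsm; auto with smooth.
Qed.

Lemma GdV_int : is_RInt GdV 0 (2 * L) (GV (2 * L) - GV 0).
Proof.
  apply (is_RInt_derive (V := R_CompleteNormedModule) GV GdV).
  - intros s Hs. rewrite Rmin_left in Hs by lra. rewrite Rmax_right in Hs by lra.
    apply GV_der. apply inU_I; auto.
  - intros s Hs. rewrite Rmin_left in Hs by lra. rewrite Rmax_right in Hs by lra.
    apply GdV_cont. apply inU_I; auto.
Qed.

Definition phiV s := pdt Vx s 0 * normal_x (gamma_x x0 L) (gamma_y x0 L) s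
                   + pdt Vy s 0 * normal_y (gamma_x x0 L) (gamma_y x0 L) s.
Definition phi1V s := phi1e (gT1 x0 L s) (gT2 x0 L s) (gamma_x x0 L s) (gamma_y x0 L s) (hh x0 L s) (hh1 x0 L s) (al x0 L)
  (pdt Vx s 0) (pds (pdt Vx) s 0) (pds (pds (pdt Vx)) s 0)
  (pdt Vy s 0) (pds (pdt Vy) s 0) (pds (pds (pdt Vy)) s 0)
  (pdt (pdt Vx) s 0) (pds (pdt (pdt Vx)) s 0) (pds (pds (pdt (pdt Vx))) s 0)
  (pdt (pdt Vy) s 0) (pds (pdt (pdt Vy)) s 0) (pds (pds (pdt (pdt Vy))) s 0).
Definition phi2V s := phi2e (gT1 x0 L s) (gT2 x0 L s) (gamma_x x0 L s) (gamma_y x0 L s) (hh x0 L s) (hh1 x0 L s) (al x0 L)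
  (pdt Vx s 0) (pds (pdt Vx) s 0) (pds (pds (pdt Vx)) s 0)
  (pdt Vy s 0) (pds (pdt Vy) s 0) (pds (pds (pdt Vy)) s 0)
  (pdt (pdt Vx) s 0) (pds (pdt (pdt Vx)) s 0) (pds (pds (pdt (pdt Vx))) s 0)
  (pdt (pdt Vy) s 0) (pds (pdt (pdt Vy)) s 0) (pds (pds (pdt (pdt Vy))) s 0).

Lemma phiV_loc s : inU x0 L s -> phiV s = pdt Vx s 0 * gT2 x0 L s + pdt Vy s 0 * (- gT1 x0 L s).
Proof. intros H. unfold phiV. rewrite nx_g, ny_g by auto. reflexivity. Qed.

Lemma dphiV s : inU x0 L s -> Derive phiV s = phi1V s.
Proof.
  intros Hs. pose proof HVx as HX. pose proof HVy as HY.
  rewrite (Derive_ext_loc _ (fun s => pdt Vx s 0 * gT2 x0 L s + pdt Vy s 0 * (- gT1 x0 L s))).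
  - apply is_derive_unique. unfold phi1V.
    apply (phi1_der (gT1 x0 L) (gT2 x0 L) (gamma_x x0 L) (gamma_y x0 L) (hh x0 L) (hh1 x0 L)
    (fun s => pdt Vx s 0) (fun s => pds (pdt Vx) s 0) (fun s => pds (pds (pdt Vx)) s 0)
    (fun s => pdt Vy s 0) (fun s => pds (pdt Vy) s 0) (fun s => pds (pds (pdt Vy)) s 0)
    (fun s => pdt (pdt Vx) s 0) (fun s => pds (pdt (pdt Vx)) s 0) (fun s => pds (pds (pdt (pdt Vx))) s 0)
    (fun s => pdt (pdt Vy) s 0) (fun s => pds (pdt (pdt Vy)) s 0) (fun s => pds (pds (pdt (pdt Vy))) s 0)).
    + apply gT1_der; auto.
    + apply gT2_der; auto.
    + apply dsm; auto with smooth.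
    + apply dsm; auto with smooth.
    + apply Rgt_not_eq, hh_pos; auto.
  - apply (filter_imp (inU x0 L)); [|apply inU_open; auto]. intros u Hu. apply phiV_loc, Hu.
Qed.

Lemma ddphiV s : inU x0 L s -> Derive (Derive phiV) s = phi2V s.
Proof.
  intros Hs. pose proof HVx as HX. pose proof HVy as HY.
  rewrite (Derive_ext_loc _ phi1V).
  - apply is_derive_unique. unfold phi1V, phi2V.
    apply (phi2_der (gT1 x0 L) (gT2 x0 L) (gamma_x x0 L) (gamma_y x0 L) (hh x0 L) (hh1 x0 L)
    (fun s => pdt Vx s 0) (fun s => pds (pdt Vx) s 0) (fun s => pds (pds (pdt Vx)) s 0)
    (fun s => pdt Vy s 0) (fun s => pds (pdt Vy) s 0) (fun s => pds (pds (pdt Vy)) s 0)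
    (fun s => pdt (pdt Vx) s 0) (fun s => pds (pdt (pdt Vx)) s 0) (fun s => pds (pds (pdt (pdt Vx))) s 0)
    (fun s => pdt (pdt Vy) s 0) (fun s => pds (pdt (pdt Vy)) s 0) (fun s => pds (pds (pdt (pdt Vy))) s 0)).
    + apply gT1_der; auto.
    + apply gT2_der; auto.
    + apply hh_der; auto.
    + apply dsm; auto with smooth.
    + apply dsm; auto with smooth.
    + apply dsm; auto with smooth.
    + apply dsm; auto with smooth.
    + apply Rgt_not_eq, hh_pos; auto.
  - apply (filter_imp (inU x0 L)); [|apply inU_open; auto]. intros u Hu. apply dphiV, Hu.
Qed.

Lemma integrand_eq s : 0 < s < 2 * L ->
  (2 - lambda0 x0 L) * curvature (gamma_x x0 L) (gamma_y x0 L) s * phiV s ^ 2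
  - 2 * (Derive phiV s) ^ 2 / curvature (gamma_x x0 L) (gamma_y x0 L) s
  + 2 * (Derive (Derive phiV) s) ^ 2 / curvature (gamma_x x0 L) (gamma_y x0 L) s ^ 3 = PV s.
Proof.
  intros Hs0. assert (Hs : inU x0 L s) by (apply inU_I; auto; lra).
  rewrite dphiV, ddphiV, phiV_loc, curv_g, lam_al by auto.
  pose proof (hh_pos x0 L Hx0 HL s Hs).
  unfold PV, Pexpr, phi1V, phi2V. field. lra.
Qed.

Lemma der_eps (f : R -> R) a l : is_derive f a l ->
  forall eps, 0 < eps -> exists d, 0 < d /\ forall h, h <> 0 -> Rabs h < d -> Rabs ((f (a + h) - f a) / h - l) < eps.
Proof.
  intros H eps He. apply is_derive_Reals in H. destruct (H eps He) as [d Hd].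
  exists d. split; [apply cond_pos|]. exact Hd.
Qed.

Lemma one_sided_eq (f g : R -> R) a l m sg d : sg = 1 \/ sg = -1 -> 0 < d ->
  is_derive f a l -> is_derive g a m -> f a = g a ->
  (forall h, 0 < h < d -> f (a + sg * h) = g (a + sg * h)) -> l = m.
Proof.
  intros Hsg Hd Hf Hg E0 Eh.
  apply Rminus_diag_uniq. apply Rabs_eq_0.
  apply Rle_antisym; [|apply Rabs_pos].
  apply Rnot_lt_le. intros Hlt.
  set (eps := Rabs (l - m) / 2).
  assert (He : 0 < eps) by (unfold eps; lra).
  destruct (der_eps f a l Hf eps He) as [d1 [Hd1 H1]].
  destruct (der_eps g a m Hg eps He) as [d2 [Hd2 H2]].
  set (h := Rmin d (Rmin d1 d2) / 2).
  assert (Hh : 0 < h) by (unfold h; assert (0 < Rmin d (Rmin d1 d2)) by (repeat apply Rmin_pos; lra); lra).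
  assert (Hhd : h < d /\ h < d1 /\ h < d2).
  { unfold h. pose proof (Rmin_l d (Rmin d1 d2)). pose proof (Rmin_r d (Rmin d1 d2)).
    pose proof (Rmin_l d1 d2). pose proof (Rmin_r d1 d2). lra. }
  assert (Hsh : sg * h <> 0 /\ Rabs (sg * h) = h).
  { destruct Hsg as [-> | ->]; split; try (intro; lra); rewrite ?Rmult_1_l.
    - apply Rabs_right; lra.
    - rewrite Rabs_left; lra. }
  specialize (H1 (sg * h) (proj1 Hsh) ltac:(rewrite (proj2 Hsh); lra)).
  specialize (H2 (sg * h) (proj1 Hsh) ltac:(rewrite (proj2 Hsh); lra)).
  rewrite Eh in H1 by lra. rewrite E0 in H1.
  assert (Rabs (l - m) <= Rabs ((g (a + sg * h) - g a) / (sg * h) - l) + Rabs ((g (a + sg * h) - g a) / (sg * h) - m)).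
  { replace (l - m) with (- ((g (a + sg * h) - g a) / (sg * h) - l) + ((g (a + sg * h) - g a) / (sg * h) - m)) by ring.
    eapply Rle_trans; [apply Rabs_triang|]. rewrite Rabs_Ropp. lra. }
  unfold eps in *. lra.
Qed.

Lemma sign_der (f : R -> R) a l sg d : sg = 1 \/ sg = -1 -> 0 < d ->
  is_derive f a l -> f a = 0 -> (forall h, 0 < h < d -> 0 < f (a + sg * h)) -> 0 <= sg * l.
Proof.
  intros Hsg Hd Hf E0 Hp. apply Rnot_lt_le. intros Hlt.
  set (eps := - (sg * l) / 2). assert (He : 0 < eps) by (unfold eps; lra).
  destruct (der_eps f a l Hf eps He) as [d1 [Hd1 H1]].
  set (h := Rmin d d1 / 2).
  assert (Hh : 0 < h) by (unfold h; assert (0 < Rmin d d1) by (apply Rmin_pos; lra); lra).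
  assert (Hhd : h < d /\ h < d1).
  { unfold h. pose proof (Rmin_l d d1). pose proof (Rmin_r d d1). lra. }
  assert (Hsh : sg * h <> 0 /\ Rabs (sg * h) = h).
  { destruct Hsg as [-> | ->]; split; try (intro; lra); rewrite ?Rmult_1_l.
    - apply Rabs_right; lra.
    - rewrite Rabs_left; lra. }
  specialize (H1 (sg * h) (proj1 Hsh) ltac:(rewrite (proj2 Hsh); lra)).
  specialize (Hp h ltac:(lra)). rewrite E0 in H1.
  apply Rabs_def2 in H1. unfold eps in H1.
  destruct Hsg as [-> | ->].
  - assert (E : (f (a + 1 * h) - 0) / (1 * h) = f (a + 1 * h) / h) by (field; lra).
    rewrite E in H1. assert (0 < f (a + 1 * h) / h) by (apply Rdiv_lt_0_compat; lra). lra.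
  - assert (E : (f (a + -1 * h) - 0) / (-1 * h) = - (f (a + -1 * h) / h)) by (field; lra).
    rewrite E in H1. assert (0 < f (a + -1 * h) / h) by (apply Rdiv_lt_0_compat; lra). lra.
Qed.

Lemma min2 (w w1 : R -> R) (w2 d : R) : 0 < d ->
  (forall u, -d < u < d -> is_derive w u (w1 u)) -> is_derive w1 0 w2 ->
  (forall u, -d < u < d -> 0 <= w u) -> w 0 = 0 -> w1 0 = 0 /\ 0 <= w2.
Proof.
  intros Hd Hw Hw1 Hpos E0.
  assert (Z : w1 0 = 0).
  { destruct (Rtotal_order (w1 0) 0) as [Hl|[He|Hg]]; [exfalso| exact He | exfalso].
    - set (eps := - w1 0 / 2). assert (Hep : 0 < eps) by (unfold eps; lra).
      destruct (der_eps w 0 (w1 0) (Hw 0 ltac:(lra)) eps Hep) as [d1 [Hd1 H1]].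
      set (h := Rmin d d1 / 2).
      assert (0 < Rmin d d1) by (apply Rmin_pos; lra).
      pose proof (Rmin_l d d1). pose proof (Rmin_r d d1).
      assert (Hh : 0 < h < d /\ h < d1) by (unfold h; lra).
      specialize (H1 h ltac:(lra) ltac:(rewrite Rabs_right; lra)).
      rewrite E0, Rplus_0_l in H1. apply Rabs_def2 in H1. unfold eps in H1.
      specialize (Hpos h ltac:(lra)).
      assert (0 <= (w h - 0) / h) by (apply Rmult_le_pos; [lra|apply Rlt_le, Rinv_0_lt_compat; lra]). lra.
    - set (eps := w1 0 / 2). assert (Hep : 0 < eps) by (unfold eps; lra).
      destruct (der_eps w 0 (w1 0) (Hw 0 ltac:(lra)) eps Hep) as [d1 [Hd1 H1]].
      set (h := - (Rmin d d1 / 2)).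
      assert (0 < Rmin d d1) by (apply Rmin_pos; lra).
      pose proof (Rmin_l d d1). pose proof (Rmin_r d d1).
      assert (Hh : -d < h < 0 /\ -h < d1) by (unfold h; lra).
      specialize (H1 h ltac:(lra) ltac:(rewrite Rabs_left; lra)).
      rewrite E0, Rplus_0_l in H1. apply Rabs_def2 in H1. unfold eps in H1.
      specialize (Hpos h ltac:(lra)).
      assert ((w h - 0) / h <= 0).
      { replace ((w h - 0) / h) with (- (w h / - h)) by (field; lra).
        assert (0 <= w h / - h) by (apply Rmult_le_pos; [lra|apply Rlt_le, Rinv_0_lt_compat; lra]). lra. }
      lra. }
  split; [exact Z|].
  apply Rnot_lt_le. intros Hlt.
  set (eps := - w2 / 2). assert (Hep : 0 < eps) by (unfold eps; lra).
  destruct (der_eps w1 0 w2 Hw1 eps Hep) as [d1 [Hd1 H1]].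
  set (b := Rmin d d1 / 2).
  assert (0 < Rmin d d1) by (apply Rmin_pos; lra).
  pose proof (Rmin_l d d1). pose proof (Rmin_r d d1).
  assert (Hb : 0 < b < d /\ b < d1) by (unfold b; lra).
  destruct (MVT_cor2 w w1 0 b ltac:(lra)) as [c [Ec Hc]].
  { intros c Hc. apply is_derive_Reals. apply Hw. lra. }
  specialize (H1 c ltac:(lra) ltac:(rewrite Rabs_right; lra)).
  rewrite Z, Rplus_0_l in H1. apply Rabs_def2 in H1. unfold eps in H1.
  assert (Hw1c : w1 c < 0).
  { assert ((w1 c - 0) / c < 0) by lra.
    replace (w1 c) with ((w1 c - 0) / c * c) by (field; lra). nra. }
  rewrite E0 in Ec. specialize (Hpos b ltac:(lra)). nra.
Qed.

Lemma Vend t : -T <= t <= T -> Vx 0 t = x0 /\ Vy 0 t = 0 /\ Vx (2 * L) t = - x0 /\ Vy (2 * L) t = 0.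
Proof. intros Ht. destruct (Hcurve t Ht) as [_ [_ [_ [_ [A [B [C [D _]]]]]]]]. auto. Qed.

Lemma Vpos t s : -T <= t <= T -> 0 < s < 2 * L -> 0 < Vy s t.
Proof. intros Ht Hs. destruct (Hcurve t Ht) as [_ [_ [_ [_ [_ [_ [_ [_ P]]]]]]]]. apply P, Hs. Qed.

Lemma pdt_const (f : R -> R -> R) a c : (forall t, -T <= t <= T -> f a t = c) ->
  forall u, -T < u < T -> pdt f a u = 0.
Proof.
  intros Hc u Hu. unfold pdt. rewrite (Derive_ext_loc _ (fun _ => c)).
  - apply Derive_const.
  - apply (filter_imp (fun z => -T < z < T)); [|apply loc_int; exact Hu]. intros z Hz. apply Hc. lra.
Qed.

Lemma pdt2_const (f : R -> R -> R) a c : (forall t, -T <= t <= T -> f a t = c) -> pdt (pdt f) a 0 = 0.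
Proof.
  intros Hc. pose proof HT. unfold pdt at 1. rewrite (Derive_ext_loc _ (fun _ => 0)).
  - apply Derive_const.
  - apply (filter_imp (fun z => -T < z < T)); [|apply loc_int; lra]. intros z Hz.
    apply (pdt_const f a c Hc z Hz).
Qed.

Lemma zeros_end : pdt Vx 0 0 = 0 /\ pdt Vy 0 0 = 0 /\ pdt (pdt Vx) 0 0 = 0 /\ pdt (pdt Vy) 0 0 = 0 /\
  pdt Vx (2 * L) 0 = 0 /\ pdt Vy (2 * L) 0 = 0 /\ pdt (pdt Vx) (2 * L) 0 = 0 /\ pdt (pdt Vy) (2 * L) 0 = 0.
Proof.
  pose proof HT.
  assert (H1 : forall t, -T <= t <= T -> Vx 0 t = x0) by (intros; apply Vend; auto).
  assert (H2 : forall t, -T <= t <= T -> Vy 0 t = 0) by (intros; apply Vend; auto).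
  assert (H3 : forall t, -T <= t <= T -> Vx (2 * L) t = - x0) by (intros; apply Vend; auto).
  assert (H4 : forall t, -T <= t <= T -> Vy (2 * L) t = 0) by (intros; apply Vend; auto).
  repeat split.
  - apply (pdt_const _ _ _ H1); lra.
  - apply (pdt_const _ _ _ H2); lra.
  - apply (pdt2_const _ _ _ H1).
  - apply (pdt2_const _ _ _ H2).
  - apply (pdt_const _ _ _ H3); lra.
  - apply (pdt_const _ _ _ H4); lra.
  - apply (pdt2_const _ _ _ H3).
  - apply (pdt2_const _ _ _ H4).
Qed.

Lemma w_pos u : -T < u < T -> 0 <= pds Vy 0 u.
Proof.
  intros Hu. pose proof HVy as HY.
  assert (0 <= 1 * pds Vy 0 u); [|lra].
  apply (sign_der (fun s => Vy s u) 0 _ 1 (2 * L)); [left; reflexivity|lra| | |].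
  - apply smooth2_ds, HY.
  - apply Vend; lra.
  - intros h Hh. apply Vpos; lra.
Qed.
Lemma w2_neg u : -T < u < T -> pds Vy (2 * L) u <= 0.
Proof.
  intros Hu. pose proof HVy as HY.
  assert (0 <= -1 * pds Vy (2 * L) u); [|lra].
  apply (sign_der (fun s => Vy s u) (2 * L) _ (-1) (2 * L)); [right; reflexivity|lra| | |].
  - apply smooth2_ds, HY.
  - apply Vend; lra.
  - intros h Hh. apply Vpos; lra.
Qed.

Lemma w_0 : pds Vy 0 0 = 0.
Proof.
  pose proof HVy as HY. pose proof HT.
  transitivity (gT2 x0 L 0); [|apply (proj2 (gT_0 x0 L Hx0 HL))].
  apply (one_sided_eq (fun s => Vy s 0) (gamma_y x0 L) 0 _ _ 1 (2 * L)); [left; reflexivity|lra| | | |].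
  - apply smooth2_ds, HY.
  - apply gy_der; auto. apply inU_I; auto; lra.
  - apply Hg0; lra.
  - intros h Hh. apply Hg0; lra.
Qed.
Lemma w2_0 : pds Vy (2 * L) 0 = 0.
Proof.
  pose proof HVy as HY. pose proof HT.
  transitivity (gT2 x0 L (2 * L)); [|apply (proj2 (gT_2L x0 L Hx0 HL))].
  apply (one_sided_eq (fun s => Vy s 0) (gamma_y x0 L) (2 * L) _ _ (-1) (2 * L)); [right; reflexivity|lra| | | |].
  - apply smooth2_ds, HY.
  - apply gy_der; auto. apply inU_I; auto; lra.
  - apply Hg0; lra.
  - intros h Hh. apply Hg0; lra.
Qed.

Lemma end0 : pds (pdt Vy) 0 0 = 0 /\ 0 <= pds (pdt (pdt Vy)) 0 0.
Proof.
  pose proof HVy as HY. pose proof HT.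
  rewrite <- (sw1 Vy HY), <- (sw3 Vy HY).
  apply (min2 (fun u => pds Vy 0 u) (fun u => pdt (pds Vy) 0 u) (pdt (pdt (pds Vy)) 0 0) T); auto.
  - intros u Hu. apply smooth2_dt. auto with smooth.
  - apply smooth2_dt. auto with smooth.
  - intros u Hu. apply w_pos, Hu.
  - apply w_0.
Qed.

Lemma end2L : pds (pdt Vy) (2 * L) 0 = 0 /\ pds (pdt (pdt Vy)) (2 * L) 0 <= 0.
Proof.
  pose proof HVy as HY. pose proof HT.
  rewrite <- (sw1 Vy HY), <- (sw3 Vy HY).
  destruct (min2 (fun u => - pds Vy (2 * L) u) (fun u => - pdt (pds Vy) (2 * L) u) (- pdt (pdt (pds Vy)) (2 * L) 0) T)
    as [A B]; auto.
  - intros u Hu. apply (is_derive_opp (fun u => pds Vy (2 * L) u)). apply smooth2_dt. auto with smooth.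
  - apply (is_derive_opp (fun u => pdt (pds Vy) (2 * L) u)). apply smooth2_dt. auto with smooth.
  - intros u Hu. pose proof (w2_neg u Hu). lra.
  - rewrite w2_0. ring.
  - split; lra.
Qed.

Definition psiV s := pdt (pdt Vx) s 0 * normal_x (gamma_x x0 L) (gamma_y x0 L) s
                   + pdt (pdt Vy) s 0 * normal_y (gamma_x x0 L) (gamma_y x0 L) s.

Lemma dpsi_end a : a = 0 \/ a = 2 * L -> Derive psiV a = - pds (pdt (pdt Vy)) a 0.
Proof.
  intros Ha. pose proof HVx as HX. pose proof HVy as HY. pose proof HT.
  assert (Hs : inU x0 L a) by (apply inU_I; auto; lra).
  rewrite (Derive_ext_loc _ (fun s => pdt (pdt Vx) s 0 * gT2 x0 L s + pdt (pdt Vy) s 0 * (- gT1 x0 L s))).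
  - erewrite (is_derive_unique _ a); [| exact (psi1_der (gT1 x0 L) (gT2 x0 L) (hh x0 L)
      (fun s => pdt (pdt Vx) s 0) (fun s => pds (pdt (pdt Vx)) s 0)
      (fun s => pdt (pdt Vy) s 0) (fun s => pds (pdt (pdt Vy)) s 0) a
      ltac:(apply gT1_der; auto) ltac:(apply gT2_der; auto)
      ltac:(apply dsm; auto with smooth) ltac:(apply dsm; auto with smooth)
      ltac:(apply Rgt_not_eq, hh_pos; auto))].
    destruct zeros_end as [Z1 [Z2 [Z3 [Z4 [Z5 [Z6 [Z7 Z8]]]]]]].
    pose proof (hh_pos x0 L Hx0 HL a Hs).
    destruct Ha as [-> | ->].
    + rewrite Z3, Z4, (proj1 (gT_0 x0 L Hx0 HL)), (proj2 (gT_0 x0 L Hx0 HL)). field. lra.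
    + rewrite Z7, Z8, (proj1 (gT_2L x0 L Hx0 HL)), (proj2 (gT_2L x0 L Hx0 HL)). field. lra.
  - apply (filter_imp (inU x0 L)); [|apply inU_open; auto]. intros u Hu. unfold psiV.
    rewrite nx_g, ny_g by auto. reflexivity.
Qed.

Lemma GV_end a : a = 0 \/ a = 2 * L -> GV a = - hh x0 L a ^ 2 * pds (pdt (pdt Vy)) a 0.
Proof.
  intros Ha. destruct zeros_end as [Z1 [Z2 [Z3 [Z4 [Z5 [Z6 [Z7 Z8]]]]]]].
  unfold GV, Gpoly. destruct Ha as [-> | ->].
  - rewrite Z1, Z2, Z3, Z4, (proj1 end0), (proj1 (gT_0 x0 L Hx0 HL)), (proj2 (gT_0 x0 L Hx0 HL)). ring.
  - rewrite Z5, Z6, Z7, Z8, (proj1 end2L), (proj1 (gT_2L x0 L Hx0 HL)), (proj2 (gT_2L x0 L Hx0 HL)). ring.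
Qed.

Lemma boundary_eq :
  Derive psiV (2 * L) / curvature (gamma_x x0 L) (gamma_y x0 L) (2 * L) ^ 2
  - Derive psiV 0 / curvature (gamma_x x0 L) (gamma_y x0 L) 0 ^ 2 = GV (2 * L) - GV 0.
Proof.
  pose proof HT.
  assert (H0 : inU x0 L 0) by (apply inU_I; auto; lra).
  assert (H2 : inU x0 L (2 * L)) by (apply inU_I; auto; lra).
  pose proof (hh_pos x0 L Hx0 HL 0 H0). pose proof (hh_pos x0 L Hx0 HL (2 * L) H2).
  rewrite (dpsi_end 0), (dpsi_end (2 * L)), (GV_end 0), (GV_end (2 * L)), !curv_g by (auto; lra).
  field. lra.
Qed.

Lemma boundary_nonneg : 0 <= GV (2 * L) - GV 0.
Proof.
  rewrite (GV_end 0), (GV_end (2 * L)) by (auto; lra).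
  pose proof (proj2 end0). pose proof (proj2 end2L).
  assert (0 <= hh x0 L 0 ^ 2) by apply pow2_ge_0.
  assert (0 <= hh x0 L (2 * L) ^ 2) by apply pow2_ge_0. nra.
Qed.

Lemma int_final : RInt (fun s => ff2 Vx Vy mu0 0 s) 0 (2 * L) =
  RInt (fun s => (2 - lambda0 x0 L) * curvature (gamma_x x0 L) (gamma_y x0 L) s * phiV s ^ 2
  - 2 * (Derive phiV s) ^ 2 / curvature (gamma_x x0 L) (gamma_y x0 L) s
  + 2 * (Derive (Derive phiV) s) ^ 2 / curvature (gamma_x x0 L) (gamma_y x0 L) s ^ 3) 0 (2 * L)
  + (GV (2 * L) - GV 0).
Proof.
  pose proof HVx as HX. pose proof HVy as HY. pose proof HT.
  assert (Ef : ex_RInt (fun s => ff2 Vx Vy mu0 0 s) 0 (2 * L)).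
  { apply (ex_RInt_continuous (V := R_CompleteNormedModule)). intros z Hz.
    rewrite Rmin_left in Hz by lra. rewrite Rmax_right in Hz by lra.
    apply cont2d_cont1. apply (ff2_cont Vx Vy mu0 T); auto. apply Om_in; auto. lra. }
  assert (EG : ex_RInt GdV 0 (2 * L)) by (eexists; apply GdV_int).
  assert (Eq1 : forall s, 0 < s < 2 * L -> ff2 Vx Vy mu0 0 s = PV s + GdV s).
  { intros s Hs. rewrite ff2_at0 by exact Hs.
    assert (Hs' : inU x0 L s) by (apply inU_I; auto; lra).
    pose proof (key_id (gT1 x0 L s) (gT2 x0 L s) (gamma_x x0 L s) (gamma_y x0 L s) (hh x0 L s) (hh1 x0 L s) (al x0 L)
      (pdt Vx s 0) (pds (pdt Vx) s 0) (pds (pds (pdt Vx)) s 0)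
      (pdt Vy s 0) (pds (pdt Vy) s 0) (pds (pds (pdt Vy)) s 0)
      (pdt (pdt Vx) s 0) (pds (pdt (pdt Vx)) s 0) (pds (pds (pdt (pdt Vx))) s 0)
      (pdt (pdt Vy) s 0) (pds (pdt (pdt Vy)) s 0) (pds (pds (pdt (pdt Vy))) s 0)
      (gT_norm x0 L s) ltac:(apply Rgt_not_eq, hh_pos; auto)) as K.
    unfold QsV, PV, GdV. lra. }
  assert (EP : ex_RInt PV 0 (2 * L)).
  { apply (ex_RInt_ext (fun s => ff2 Vx Vy mu0 0 s - GdV s)).
    - intros s Hs. rewrite Rmin_left in Hs by lra. rewrite Rmax_right in Hs by lra.
      assert (E : ff2 Vx Vy mu0 0 s - GdV s = PV s) by (rewrite Eq1 by exact Hs; ring). exact E.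
    - apply (ex_RInt_minus (V := R_CompleteNormedModule)); assumption. }
  rewrite (RInt_ext _ (fun s => PV s + GdV s)).
  2: { intros s Hs. rewrite Rmin_left in Hs by lra. rewrite Rmax_right in Hs by lra. apply Eq1, Hs. }
  assert (E : RInt (fun s => PV s + GdV s) 0 (2 * L) = RInt PV 0 (2 * L) + RInt GdV 0 (2 * L))
    by (apply (RInt_plus (V := R_CompleteNormedModule)); assumption).
  rewrite E.
  assert (E2 : RInt GdV 0 (2 * L) = GV (2 * L) - GV 0) by (apply (is_RInt_unique (V := R_CompleteNormedModule)); exact GdV_int).
  rewrite E2.
  f_equal. symmetry. apply RInt_ext.
  intros s Hs. rewrite Rmin_left in Hs by lra. rewrite Rmax_right in Hs by lra. apply integrand_eq, Hs.
Qed.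

Lemma le_plus_nonneg (a b : R) : 0 <= b -> a <= a + b.
Proof. intros; lra. Qed.

Lemma final_stmt :
  let gx := gamma_x x0 L in
  let gy := gamma_y x0 L in
  let lam := lambda0 x0 L in
  let H := curvature gx gy in
  let Xx := fun s => pdt Vx s 0 in
  let Xy := fun s => pdt Vy s 0 in
  let X'x := fun s => pdt (pdt Vx) s 0 in
  let X'y := fun s => pdt (pdt Vy) s 0 in
  let phi := fun s => Xx s * normal_x gx gy s + Xy s * normal_y gx gy s in
  let psi := fun s => X'x s * normal_x gx gy s + X'y s * normal_y gx gy s in
  let E := fun t => funcF L (fun s => Vx s t) (fun s => Vy s t)
                    - lam * areaA L (fun s => Vx s t) (fun s => Vy s t) in
  let I := RInt (fun s => (2 - lam) * H s * phi s ^ 2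
                          - 2 * (Derive phi s) ^ 2 / H s
                          + 2 * (Derive (Derive phi) s) ^ 2 / H s ^ 3)
                0 (2 * L) in
  let boundary := Derive psi (2 * L) / H (2 * L) ^ 2 - Derive psi 0 / H 0 ^ 2 in
  (forall t, -T < t < T -> ex_derive E t) /\
  is_derive (Derive E) 0 (I + boundary) /\
  I <= I + boundary.
Proof.
  destruct EE_ders as [D1 D2].
  intros gx gy lam H Xx Xy X'x X'y phi psi E I boundary.
  assert (Eb : boundary = GV (2 * L) - GV 0) by exact boundary_eq.
  assert (EI : RInt (fun s => ff2 Vx Vy mu0 0 s) 0 (2 * L) = I + boundary).
  { rewrite Eb. exact int_final. }
  split; [|split].
  - intros t Ht. eexists. exact (D1 t Ht).
  - rewrite <- EI. exact D2.
  - apply le_plus_nonneg. rewrite Eb. exact boundary_nonneg.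
Qed.
End Main.

Theorem mainTheorem12 (x0 L : R) (Vx Vy : R -> R -> R) (T : R) :
  0 < 3 * x0 -> 3 * x0 < L ->
  admissible_variation x0 L (gamma_x x0 L) (gamma_y x0 L) Vx Vy T ->
  let gx := gamma_x x0 L in
  let gy := gamma_y x0 L in
  let lam := lambda0 x0 L in
  let H := curvature gx gy in
  (* X = d/dt V |_{t=0},  X' = d^2/dt^2 V |_{t=0} *)
  let Xx := fun s => pdt Vx s 0 in
  let Xy := fun s => pdt Vy s 0 in
  let X'x := fun s => pdt (pdt Vx) s 0 in
  let X'y := fun s => pdt (pdt Vy) s 0 in
  (* normal components: phi = <X, N>, psi = <X', N> *)
  let phi := fun s => Xx s * normal_x gx gy s + Xy s * normal_y gx gy s in
  let psi := fun s => X'x s * normal_x gx gy s + X'y s * normal_y gx gy s in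
  let E := fun t => funcF L (fun s => Vx s t) (fun s => Vy s t)
                    - lam * areaA L (fun s => Vx s t) (fun s => Vy s t) in
  let I := RInt (fun s => (2 - lam) * H s * phi s ^ 2
                          - 2 * (Derive phi s) ^ 2 / H s
                          + 2 * (Derive (Derive phi) s) ^ 2 / H s ^ 3)
                0 (2 * L) in
  let boundary := Derive psi (2 * L) / H (2 * L) ^ 2 - Derive psi 0 / H 0 ^ 2 in
  (forall t, -T < t < T -> ex_derive E t) /\
  is_derive (Derive E) 0 (I + boundary) /\
  I <= I + boundary.
Proof.
  intros Hx0 HL Hadm. exact (final_stmt x0 L Vx Vy T Hx0 HL Hadm).
Qed.
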